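(* Let $\phi_\mathcal{D}(z)$ be a power series with non-negative coefficients, $[z^0]\phi_\mathcal{D}>0$ and $[z^k]\phi_\mathcal{D}>0$ for some $k\ge2$, let $D(z)$ be the unique power series with $D(z)=z\,\phi_\mathcal{D}(D(z))$, and let $\phi(z)=1/(1-D(z))$. Types of $\phi_\mathcal{D}$ and of $\phi$ refer to the types of their coefficient sequences. (1) If $\phi_\mathcal{D}$ has type I, then $\phi$ has type I$a$ with $\nu=\infty$. (2) Suppose $\phi_\mathcal{D}$ has type II; let $\tau_\mathcal{D}$ be the radius of convergence of $\phi_\mathcal{D}$ and $\nu_\mathcal{D}=\lim_{t\uparrow\tau_\mathcal{D}}t\phi_\mathcal{D}'(t)/\phi_\mathcal{D}(t)\in(0,1)$. (a) If $\tau_\mathcal{D}<1$, then the parameter $\nu$ of $\phi$ equals $\nu=\frac{\tau_\mathcal{D}}{(1-\tau_\mathcal{D})(1-\nu_\mathcal{D})}\in(0,\infty)$. (b) If $\tau_\mathcal{D}\ge1$, then $\phi$ has type I$a$ with $\nu=\infty$. (3) If $\phi_\mathcal{D}$ has type III, then $\nu=0$, i.e. $\phi$ has type III.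
   Context: (Combinatorially, $\phi_\mathcal{D}$ is the generating series of the weighted $\textsc{SEQ}\circ\textsc{SEQ}_{\ge1}$-structures defining face-weighted dissections $D(z)$, and $\phi$ that of sequences of dissections, governing random outerplanar maps.) Types of a weight sequence $(\omega_k)_{k\ge0}$ with $\omega_0>0$ and $\omega_k>0$ for some $k\ge2$ and generating series $\Phi(z)=\sum\omega_kz^k$ of radius $\rho$: if $\rho>0$, $\Psi(t)=t\Phi'(t)/\Phi(t)$ on $[0,\rho)$ and $\nu=\lim_{t\uparrow\rho}\Psi(t)\in(0,\infty]$; if $\rho=0$, $\nu=0$. Type I: $\nu\ge1$; type I$a$: $\nu>1$; type II: $0<\nu<1$; type III: $\nu=0$. Here $\nu$ without subscript refers to $\Phi=\phi$. *)

(* Defs.v *)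
From Stdlib Require Import Reals Lra Classical ClassicalEpsilon.
Open Scope R_scope.

Definition ps := nat -> R.

Definition ps_one : ps := fun n => match n with O => 1 | S _ => 0 end.

Definition ps_mul (a b : ps) : ps :=
  fun n => sum_f_R0 (fun k => a k * b (n - k)%nat) n.

Fixpoint ps_pow (a : ps) (k : nat) : ps :=
  match k with O => ps_one | S k' => ps_mul a (ps_pow a k') end.

(** Composition f(g(z)), meaningful when g 0 = 0 (then [z^n] g^k = 0 for k > n). *)
Definition ps_comp (f g : ps) : ps :=
  fun n => sum_f_R0 (fun k => f k * ps_pow g k n) n.

(** D(z) = z * phiD(D(z)) as formal power series. *)
Definition is_D_series (phiD d : ps) : Prop :=
  d O = 0 /\ forall n, d (S n) = ps_comp phiD d n.

(** phi(z) = 1/(1 - D(z)) = sum_k D(z)^k  (D has zero constant term). *)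
Definition phi_of (d : ps) : ps :=
  fun n => sum_f_R0 (fun k => ps_pow d k n) n.

Definition weight_seq (w : ps) : Prop :=
  (forall n, 0 <= w n) /\ 0 < w O /\ exists k, (2 <= k)%nat /\ 0 < w k.

Inductive ext := Fin (x : R) | PInf.

Definition ext_ge (a b : ext) : Prop :=
  match a, b with
  | PInf, _ => True
  | Fin _, PInf => False
  | Fin x, Fin y => y <= x
  end.

Definition ext_gt (a b : ext) : Prop :=
  match a, b with
  | PInf, Fin _ => True
  | PInf, PInf => False
  | Fin _, PInf => False
  | Fin x, Fin y => y < x
  end.

Definition ps_conv (w : ps) (t : R) : Prop :=
  exists l, infinite_sum (fun n => w n * t ^ n) l.

Definition is_radius (w : ps) (r : ext) : Prop :=
  match r with
  | Fin rho => 0 <= rho /\ (forall t, 0 <= t < rho -> ps_conv w t)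
                        /\ (forall t, rho < t -> ~ ps_conv w t)
  | PInf => forall t, 0 <= t -> ps_conv w t
  end.

(** Value of a convergent series (junk value otherwise). *)
Definition sumR (u : nat -> R) : R :=
  epsilon (inhabits 0) (fun l => infinite_sum u l).

(** Phi(t) = sum w_n t^n and t Phi'(t) = sum n w_n t^n (termwise derivative). *)
Definition PhiR (w : ps) (t : R) : R := sumR (fun n => w n * t ^ n).
Definition tDPhiR (w : ps) (t : R) : R := sumR (fun n => INR n * w n * t ^ n).
Definition Psi (w : ps) (t : R) : R := tDPhiR w t / PhiR w t.

Definition left_lim (rho : ext) (f : R -> R) (L : ext) : Prop :=
  match rho, L with
  | Fin r, Fin l => forall eps, 0 < eps -> exists del, 0 < del /\
        forall t, r - del < t < r -> Rabs (f t - l) < eps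
  | Fin r, PInf => forall M, exists del, 0 < del /\
        forall t, r - del < t < r -> M < f t
  | PInf, Fin l => forall eps, 0 < eps -> exists A,
        forall t, A < t -> Rabs (f t - l) < eps
  | PInf, PInf => forall M, exists A, forall t, A < t -> M < f t
  end.

Definition nu_param (w : ps) (nu : ext) : Prop :=
  (is_radius w (Fin 0) /\ nu = Fin 0) \/
  (exists rho, is_radius w rho /\ rho <> Fin 0 /\ left_lim rho (Psi w) nu).

Definition typeI (w : ps) : Prop := exists nu, nu_param w nu /\ ext_ge nu (Fin 1).
Definition typeIa (w : ps) : Prop := exists nu, nu_param w nu /\ ext_gt nu (Fin 1).
Definition typeII (w : ps) : Prop :=
  exists nu, nu_param w nu /\ ext_gt nu (Fin 0) /\ ext_gt (Fin 1) nu.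
Definition typeIII (w : ps) : Prop := nu_param w (Fin 0).

(* Main.v *)
Require Import Defs.
From Stdlib Require Import Reals Lra Lia Arith Classical ClassicalEpsilon FunctionalExtensionality.
From Coquelicot Require Import Coquelicot.
Open Scope R_scope.


Lemma sum_nonneg_le (f : nat -> R) (N : nat) :
  (forall i, (i <= N)%nat -> 0 <= f i) -> 0 <= sum_f_R0 f N.
Proof.
  induction N as [|N IH]; intros H; simpl.
  - apply H; lia.
  - assert (0 <= sum_f_R0 f N) by (apply IH; intros; apply H; lia).
    assert (0 <= f (S N)) by (apply H; lia). lra.
Qed.

Lemma sum_mono_idx (f : nat -> R) (N M : nat) :
  (forall i, 0 <= f i) -> (N <= M)%nat -> sum_f_R0 f N <= sum_f_R0 f M.
Proof.
  intros Hf Hle. induction Hle as [|M Hle IH]. lra.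
  simpl. specialize (Hf (S M)). lra.
Qed.

Lemma sum_tail_zero (f : nat -> R) (n K : nat) :
  (forall k, (n < k)%nat -> f k = 0) -> (n <= K)%nat -> sum_f_R0 f K = sum_f_R0 f n.
Proof.
  intros Hz Hle. induction Hle as [|K Hle IH]. reflexivity.
  simpl. rewrite IH, Hz by lia. ring.
Qed.

Lemma sum_le_tail_zero (f : nat -> R) (n K : nat) :
  (forall k, 0 <= f k) -> (forall k, (n < k)%nat -> f k = 0) ->
  sum_f_R0 f K <= sum_f_R0 f n.
Proof.
  intros Hf Hz. destruct (le_lt_dec K n) as [H|H].
  - apply sum_mono_idx; auto.
  - rewrite (sum_tail_zero f n K); auto; try lra. lia.
Qed.

Lemma sum_swap (h : nat -> nat -> R) (N M : nat) :
  sum_f_R0 (fun n => sum_f_R0 (fun k => h k n) M) N =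
  sum_f_R0 (fun k => sum_f_R0 (fun n => h k n) N) M.
Proof.
  induction N as [|N IH]; simpl.
  - reflexivity.
  - rewrite IH. rewrite <- sum_plus. reflexivity.
Qed.

Lemma sum_shift (f : nat -> R) (N : nat) :
  sum_f_R0 f (S N) = f O + sum_f_R0 (fun i => f (S i)) N.
Proof.
  induction N as [|N IH].
  - simpl. ring.
  - rewrite tech5, IH. simpl. ring.
Qed.

Lemma sum_mult_l (c : R) (f : nat -> R) (N : nat) :
  sum_f_R0 (fun i => c * f i) N = c * sum_f_R0 f N.
Proof.
  rewrite scal_sum. apply sum_eq. intros; ring.
Qed.

Lemma ps_pow_zero (a : ps) : a O = 0 ->
  forall k n, (n < k)%nat -> ps_pow a k n = 0.
Proof.
  intros Ha0 k. induction k as [|k IH]; intros n Hn.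
  - lia.
  - simpl. unfold ps_mul. apply sum_eq_R0. intros i Hi.
    destruct i as [|i].
    + rewrite Ha0. ring.
    + rewrite IH by lia. ring.
Qed.

Lemma ps_pow_local (a b : ps) (N : nat) :
  (forall i, (i <= N)%nat -> a i = b i) ->
  forall k n, (n <= N)%nat -> ps_pow a k n = ps_pow b k n.
Proof.
  intros Hab k. induction k as [|k IH]; intros n Hn.
  - reflexivity.
  - simpl. unfold ps_mul. apply sum_eq. intros i Hi.
    rewrite Hab by lia. rewrite IH by lia. reflexivity.
Qed.

Lemma ps_pow_nonneg_le (a : ps) (N : nat) :
  (forall i, (i <= N)%nat -> 0 <= a i) ->
  forall k n, (n <= N)%nat -> 0 <= ps_pow a k n.
Proof.
  intros Ha k. induction k as [|k IH]; intros n Hn.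
  - simpl. unfold ps_one. destruct n; lra.
  - simpl. unfold ps_mul. apply sum_nonneg_le. intros i Hi.
    apply Rmult_le_pos. apply Ha; lia. apply IH; lia.
Qed.

Lemma ps_pow_nonneg (a : ps) : (forall i, 0 <= a i) ->
  forall k n, 0 <= ps_pow a k n.
Proof.
  intros Ha k n. apply (ps_pow_nonneg_le a n); auto.
Qed.

Lemma ps_pow_mono (a b : ps) : (forall i, 0 <= a i <= b i) ->
  forall k n, ps_pow a k n <= ps_pow b k n.
Proof.
  intros Hab k. induction k as [|k IH]; intros n.
  - simpl. lra.
  - simpl. unfold ps_mul. apply sum_Rle. intros i Hi.
    apply Rmult_le_compat.
    + apply Hab.
    + apply ps_pow_nonneg. intros j; apply Hab.
    + apply Hab.
    + apply IH.
Qed.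

Lemma ps_pow_1 (a : ps) n : ps_pow a 1 n = a n.
Proof.
  simpl. unfold ps_mul. destruct n as [|n].
  - simpl. unfold ps_one. ring.
  - rewrite tech5. rewrite sum_eq_R0.
    + rewrite Nat.sub_diag. unfold ps_one. ring.
    + intros i Hi. replace (S n - i)%nat with (S (n - i)) by lia.
      unfold ps_one. ring.
Qed.

Lemma d_nonneg (F d : ps) : (forall n, 0 <= F n) -> is_D_series F d ->
  forall n, 0 <= d n.
Proof.
  intros HF [Hd0 Hd] n.
  assert (H : forall N i, (i <= N)%nat -> 0 <= d i).
  { induction N as [|N IH]; intros i Hi.
    - replace i with O by lia. rewrite Hd0; lra.
    - destruct (Nat.eq_dec i (S N)) as [->|Hne].
      + rewrite Hd. unfold ps_comp. apply sum_nonneg_le. intros k Hk.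
        apply Rmult_le_pos. apply HF. apply (ps_pow_nonneg_le d N); auto.
      + apply IH; lia. }
  apply (H n); lia.
Qed.

Lemma d_one (F d : ps) : is_D_series F d -> d 1%nat = F O.
Proof.
  intros [Hd0 Hd]. rewrite Hd. unfold ps_comp. simpl. unfold ps_one. ring.
Qed.

Lemma phi_of_comp (d : ps) n : phi_of d n = ps_comp (fun _ => 1) d n.
Proof.
  unfold phi_of, ps_comp. apply sum_eq. intros; ring.
Qed.

Definition term (a : ps) (t : R) := fun n => a n * t ^ n.

Lemma sumR_eq u l : infinite_sum u l -> sumR u = l.
Proof.
  intros H. unfold sumR.
  assert (Hex : exists l, infinite_sum u l) by (exists l; auto).
  pose proof (epsilon_spec (inhabits 0) (fun l => infinite_sum u l) Hex) as Hs.
  simpl in Hs. eapply uniqueness_sum; eauto.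
Qed.

Lemma PhiR_eq a t l : infinite_sum (term a t) l -> PhiR a t = l.
Proof. intros H. exact (sumR_eq _ _ H). Qed.

Lemma PhiR_spec a t : ps_conv a t -> infinite_sum (term a t) (PhiR a t).
Proof.
  intros [l Hl]. rewrite (PhiR_eq a t l Hl). exact Hl.
Qed.

Lemma lim_le_const (u : nat -> R) l M : Un_cv u l -> (forall n, u n <= M) -> l <= M.
Proof.
  intros Hu HM. apply is_lim_seq_Reals in Hu.
  pose proof (is_lim_seq_le u (fun _ => M) l M HM Hu (is_lim_seq_const M)). simpl in H. exact H.
Qed.

Lemma lim_le_lim (u v : nat -> R) l1 l2 : Un_cv u l1 -> Un_cv v l2 -> (forall n, u n <= v n) -> l1 <= l2.
Proof.
  intros Hu Hv HM. apply is_lim_seq_Reals in Hu. apply is_lim_seq_Reals in Hv.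
  pose proof (is_lim_seq_le u v l1 l2 HM Hu Hv). simpl in H. exact H.
Qed.

Lemma term_nonneg a t : (forall n, 0 <= a n) -> 0 <= t -> forall n, 0 <= term a t n.
Proof. intros Ha Ht n. unfold term. apply Rmult_le_pos; auto. apply pow_le; auto. Qed.

Lemma bounded_conv (u : nat -> R) M : (forall n, 0 <= u n) ->
  (forall N, sum_f_R0 u N <= M) -> exists l, infinite_sum u l /\ l <= M.
Proof.
  intros Hu HM.
  assert (Hg : Un_growing (fun N => sum_f_R0 u N)).
  { intros n. simpl. specialize (Hu (S n)). lra. }
  assert (Hb : has_ub (fun N => sum_f_R0 u N)).
  { exists M. intros x [n ->]. apply HM. }
  destruct (growing_cv _ Hg Hb) as [l Hl].
  exists l. split. exact Hl. eapply lim_le_const; eauto.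
Qed.

Lemma ps_conv_bounded a t M : (forall n, 0 <= a n) -> 0 <= t ->
  (forall N, sum_f_R0 (term a t) N <= M) -> ps_conv a t /\ PhiR a t <= M.
Proof.
  intros Ha Ht HM. destruct (bounded_conv (term a t) M (term_nonneg a t Ha Ht) HM) as [l [Hl Hle]].
  split. exists l; exact Hl. rewrite (PhiR_eq a t l Hl). exact Hle.
Qed.

Lemma partial_le a t N : (forall n, 0 <= a n) -> 0 <= t -> ps_conv a t ->
  sum_f_R0 (term a t) N <= PhiR a t.
Proof.
  intros Ha Ht Hc. apply sum_incr. apply PhiR_spec; auto. apply term_nonneg; auto.
Qed.

Lemma PhiR_nonneg a t : (forall n, 0 <= a n) -> 0 <= t -> ps_conv a t -> 0 <= PhiR a t.
Proof.
  intros Ha Ht Hc. eapply Rle_trans; [|apply (partial_le a t O); auto].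
  simpl. apply term_nonneg; auto.
Qed.

Lemma conv_le_bound a t M : (forall n, 0 <= a n) -> 0 <= t -> ps_conv a t ->
  (forall N, sum_f_R0 (term a t) N <= M) -> PhiR a t <= M.
Proof.
  intros Ha Ht Hc HM. eapply lim_le_const. apply PhiR_spec; auto. auto.
Qed.

Lemma conv_ge_partial a t M N : (forall n, 0 <= a n) -> 0 <= t -> ps_conv a t ->
  M <= sum_f_R0 (term a t) N -> M <= PhiR a t.
Proof.
  intros Ha Ht Hc HM. eapply Rle_trans; eauto. apply partial_le; auto.
Qed.

Lemma conv_mono_t a s t : (forall n, 0 <= a n) -> 0 <= s <= t -> ps_conv a t ->
  ps_conv a s /\ PhiR a s <= PhiR a t.
Proof.
  intros Ha Hst Hc. apply ps_conv_bounded; auto. lra.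
  intros N. eapply Rle_trans; [|apply (partial_le a t N); auto; lra].
  apply sum_Rle. intros n _. unfold term. apply Rmult_le_compat_l; auto.
  apply pow_incr. lra.
Qed.

Lemma conv_mono_coef a b t : (forall n, 0 <= a n <= b n) -> 0 <= t -> ps_conv b t ->
  ps_conv a t /\ PhiR a t <= PhiR b t.
Proof.
  intros Hab Ht Hc. apply ps_conv_bounded; auto. intros n; apply Hab.
  intros N. eapply Rle_trans; [|apply (partial_le b t N); auto].
  apply sum_Rle. intros n _. unfold term. apply Rmult_le_compat_r. apply pow_le; auto. apply Hab.
  intros n; generalize (Hab n); lra.
Qed.

Lemma PhiR_partial_lim a t : ps_conv a t -> Un_cv (fun N => sum_f_R0 (term a t) N) (PhiR a t).
Proof. intros H. apply PhiR_spec. auto. Qed.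

Lemma is_lim_seq_pow (u : nat -> R) y k : Un_cv u y -> Un_cv (fun n => u n ^ k) (y ^ k).
Proof.
  intros Hu. apply is_lim_seq_Reals. apply is_lim_seq_Reals in Hu.
  induction k as [|k IH].
  - simpl. apply is_lim_seq_const.
  - simpl. apply is_lim_seq_mult'; auto.
Qed.

Lemma lim_poly (f : ps) (u : nat -> R) y K : Un_cv u y ->
  Un_cv (fun n => sum_f_R0 (fun k => f k * u n ^ k) K) (sum_f_R0 (fun k => f k * y ^ k) K).
Proof.
  intros Hu. apply is_lim_seq_Reals.
  induction K as [|K IH]; cbn [sum_f_R0].
  - apply is_lim_seq_scal_l with (a := f O) (lu := Finite (y^0)). apply is_lim_seq_Reals.
    apply is_lim_seq_pow; auto.
  - apply is_lim_seq_plus'; auto.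
    apply is_lim_seq_scal_l with (a := f (S K)) (lu := Finite (y^(S K))). apply is_lim_seq_Reals.
    apply is_lim_seq_pow; auto.
Qed.

Lemma finite_support_sum (u : nat -> R) M : (forall n, (M < n)%nat -> u n = 0) ->
  infinite_sum u (sum_f_R0 u M).
Proof.
  intros Hz eps Heps. exists M. intros n Hn. unfold R_dist.
  rewrite (sum_tail_zero u M n); auto. rewrite Rminus_diag, Rabs_R0. lra.
Qed.

Lemma is_pseries_term a x l : is_pseries a x l <-> infinite_sum (term a x) l.
Proof.
  unfold is_pseries. rewrite <- is_series_Reals.
  assert (E : forall n, scal (pow_n x n) (a n) = term a x n).
  { intros n. unfold term. rewrite pow_n_pow. unfold scal; simpl; unfold mult; simpl. ring. }
  split; intros H.
  - apply (is_series_ext _ _ l E H).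
  - apply (is_series_ext (term a x)); auto.
Qed.

Lemma CV_disk_radius a r : CV_disk a r -> Rbar_le r (CV_radius a).
Proof.
  intros H. unfold CV_radius. destruct (Lub_Rbar_correct (CV_disk a)) as [Hub _]. apply Hub; auto.
Qed.

Lemma conv_radius a t r : (forall n, 0 <= a n) -> 0 <= t < r -> ps_conv a r ->
  Rbar_lt (Rabs t) (CV_radius a).
Proof.
  intros Ha Ht [l Hl].
  assert (Hd : CV_disk a r).
  { exists l. apply (is_series_ext (term a r)).
    - intros n. unfold term. rewrite Rabs_pos_eq; auto. apply Rmult_le_pos; auto. apply pow_le; lra.
    - apply is_series_Reals; auto. }
  apply CV_disk_radius in Hd. rewrite Rabs_pos_eq by lra.
  eapply Rbar_lt_le_trans; [|exact Hd]. simpl. lra.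
Qed.

Lemma finsupp_radius a M : (forall n, (M < n)%nat -> a n = 0) ->
  forall t, Rbar_lt (Rabs t) (CV_radius a).
Proof.
  intros Hz t.
  assert (Hd : CV_disk a (Rabs t + 1)).
  { exists (sum_f_R0 (fun n => Rabs (a n * (Rabs t + 1) ^ n)) M).
    apply is_series_Reals. apply finite_support_sum. intros n Hn. rewrite Hz; auto.
    rewrite Rmult_0_l, Rabs_R0; auto. }
  apply CV_disk_radius in Hd. eapply Rbar_lt_le_trans; [|exact Hd]. simpl. lra.
Qed.

Definition tr (g : ps) (M : nat) : ps := fun n => if (n <=? M)%nat then g n else 0.

Lemma tr_zero g M n : (M < n)%nat -> tr g M n = 0.
Proof. intros H. unfold tr. destruct (Nat.leb_spec n M); [lia|auto]. Qed.

Lemma tr_eq g M n : (n <= M)%nat -> tr g M n = g n.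
Proof. intros H. unfold tr. destruct (Nat.leb_spec n M); [auto|lia]. Qed.

Lemma tr_bounds g M n : (forall i, 0 <= g i) -> 0 <= tr g M n <= g n.
Proof. intros Hg. unfold tr. destruct (Nat.leb_spec n M); split; auto; try lra; apply Hg. Qed.

Lemma ps_pow_finsupp a M : (forall n, (M < n)%nat -> a n = 0) ->
  forall k n, (S k * M < n)%nat -> ps_pow a (S k) n = 0.
Proof.
  intros Hz k. induction k as [|k IH]; intros n Hn.
  - rewrite ps_pow_1. apply Hz. lia.
  - change (ps_pow a (S (S k)) n) with (ps_mul a (ps_pow a (S k)) n).
    unfold ps_mul. apply sum_eq_R0. intros i Hi.
    destruct (le_lt_dec i M) as [H|H].
    + rewrite IH by lia. ring.
    + rewrite Hz by lia. ring.
Qed.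

Lemma ps_pow_finsupp' a M k : (forall n, (M < n)%nat -> a n = 0) ->
  forall n, (k * M < n)%nat -> ps_pow a k n = 0.
Proof.
  intros Hz n Hn. destruct k as [|k].
  - simpl. unfold ps_one. destruct n; [lia|auto].
  - apply (ps_pow_finsupp a M Hz k). nia.
Qed.

Lemma pow_value a M t : (forall n, (M < n)%nat -> a n = 0) ->
  forall k, infinite_sum (term (ps_pow a k) t) ((sum_f_R0 (term a t) M) ^ k).
Proof.
  intros Hz k. induction k as [|k IH].
  - simpl. replace 1 with (sum_f_R0 (term ps_one t) O) by (unfold term, ps_one; simpl; ring).
    apply finite_support_sum. intros n Hn. unfold term, ps_one. destruct n; [lia|ring].
  - apply is_pseries_term. simpl. change (ps_mul a (ps_pow a k)) with (PS_mult a (ps_pow a k)).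
    apply is_pseries_mult.
    + apply is_pseries_term. apply finite_support_sum. intros n Hn. unfold term. rewrite Hz; auto. ring.
    + apply is_pseries_term. auto.
    + apply (finsupp_radius a M Hz).
    + apply (finsupp_radius _ (k * M) (ps_pow_finsupp' a M k Hz)).
Qed.

Lemma comp_term_expand f g t n N : g O = 0 -> (n <= N)%nat ->
  term (ps_comp f g) t n = sum_f_R0 (fun k => f k * term (ps_pow g k) t n) N.
Proof.
  intros Hg0 Hn. unfold term at 1, ps_comp. rewrite Rmult_comm, <- sum_mult_l.
  transitivity (sum_f_R0 (fun k => f k * term (ps_pow g k) t n) n).
  - apply sum_eq. intros i _. unfold term. ring.
  - symmetry. apply sum_tail_zero; auto.
    intros k Hk. unfold term. rewrite (ps_pow_zero g Hg0 k n Hk). ring.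
Qed.

Section Comp.
Variables (f g : ps) (t : R).
Hypotheses (Hf : forall n, 0 <= f n) (Hg : forall n, 0 <= g n) (Hg0 : g O = 0) (Ht : 0 <= t).

Lemma comp_upper N :
  sum_f_R0 (term (ps_comp f g) t) N <=
  sum_f_R0 (fun k => f k * (sum_f_R0 (term g t) N) ^ k) N.
Proof.
  rewrite (sum_eq _ (fun n => sum_f_R0 (fun k => f k * term (ps_pow g k) t n) N) N)
    by (intros; apply comp_term_expand; auto).
  rewrite (sum_swap (fun k n => f k * term (ps_pow g k) t n)).
  apply sum_Rle. intros k Hk. rewrite sum_mult_l. apply Rmult_le_compat_l; auto.
  rewrite (sum_eq _ (term (ps_pow (tr g N) k) t) N).
  - replace (sum_f_R0 (term g t) N) with (sum_f_R0 (term (tr g N) t) N).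
    + apply sum_incr. apply (pow_value (tr g N) N t (tr_zero g N)).
      intros n. apply term_nonneg; auto. apply ps_pow_nonneg. intros i. apply tr_bounds; auto.
    + apply sum_eq. intros i Hi. unfold term. rewrite tr_eq; auto.
  - intros n Hn. unfold term. rewrite (ps_pow_local g (tr g N) N); auto.
    intros i Hi. rewrite tr_eq; auto.
Qed.

Lemma lim_finsum (u : nat -> nat -> R) (l : nat -> R) K :
  (forall k, Un_cv (u k) (l k)) ->
  Un_cv (fun L => sum_f_R0 (fun k => u k L) K) (sum_f_R0 l K).
Proof.
  intros H. apply is_lim_seq_Reals. induction K as [|K IH]; cbn [sum_f_R0].
  - apply is_lim_seq_Reals. apply H.
  - apply is_lim_seq_plus'; auto. apply is_lim_seq_Reals. apply H.
Qed.

Lemma comp_lower K M : ps_conv (ps_comp f g) t ->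
  sum_f_R0 (fun k => f k * (sum_f_R0 (term g t) M) ^ k) K <= PhiR (ps_comp f g) t.
Proof.
  intros Hc.
  set (G := sum_f_R0 (term g t) M).
  assert (HG : G = sum_f_R0 (term (tr g M) t) M).
  { apply sum_eq. intros i Hi. unfold term. rewrite tr_eq; auto. }
  apply (lim_le_const (fun L => sum_f_R0 (fun k => f k * sum_f_R0 (term (ps_pow (tr g M) k) t) L) K)).
  - apply (lim_finsum (fun k L => f k * sum_f_R0 (term (ps_pow (tr g M) k) t) L) (fun k => f k * G ^ k)).
    intros k. apply is_lim_seq_Reals. apply is_lim_seq_scal_l with (lu := Finite (G ^ k)).
    apply is_lim_seq_Reals. rewrite HG. apply (pow_value (tr g M) M t (tr_zero g M)).
  - intros L.
    apply Rle_trans with (sum_f_R0 (fun k => f k * sum_f_R0 (term (ps_pow g k) t) L) K).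
    { apply sum_Rle. intros k _. apply Rmult_le_compat_l; auto. apply sum_Rle. intros n _.
      unfold term. apply Rmult_le_compat_r. apply pow_le; auto.
      apply ps_pow_mono. intros i. apply tr_bounds; auto. }
    apply Rle_trans with (sum_f_R0 (term (ps_comp f g) t) L); [|apply partial_le; auto].
    2:{ intros n. unfold ps_comp. apply sum_nonneg_le. intros k _. apply Rmult_le_pos; auto.
        apply ps_pow_nonneg; auto. }
    rewrite <- (sum_eq (fun k => sum_f_R0 (fun n => f k * term (ps_pow g k) t n) L))
      by (intros; apply sum_mult_l).
    rewrite <- sum_swap. apply sum_Rle. intros n Hn.
    unfold term at 2, ps_comp. rewrite Rmult_comm, <- sum_mult_l.
    replace (sum_f_R0 (fun k => f k * term (ps_pow g k) t n) K) with
      (sum_f_R0 (fun i => t ^ n * (f i * ps_pow g i n)) K) by (apply sum_eq; intros; unfold term; ring).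
    apply sum_le_tail_zero.
    + intros k. apply Rmult_le_pos. apply pow_le; auto. apply Rmult_le_pos; auto. apply ps_pow_nonneg; auto.
    + intros k Hk. rewrite (ps_pow_zero g Hg0 k n Hk). ring.
Qed.

Lemma comp_conv : ps_conv g t -> ps_conv f (PhiR g t) ->
  ps_conv (ps_comp f g) t /\ PhiR (ps_comp f g) t <= PhiR f (PhiR g t).
Proof.
  intros Hcg Hcf. apply ps_conv_bounded; auto.
  - intros n. unfold ps_comp. apply sum_nonneg_le. intros k _. apply Rmult_le_pos; auto.
    apply ps_pow_nonneg; auto.
  - intros N. eapply Rle_trans; [apply comp_upper|].
    eapply Rle_trans; [|apply (partial_le f (PhiR g t) N); auto; apply PhiR_nonneg; auto].
    apply sum_Rle. intros k _. unfold term. apply Rmult_le_compat_l; auto.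
    apply pow_incr. split.
    + apply sum_nonneg_le. intros; apply term_nonneg; auto.
    + apply partial_le; auto.
Qed.

Lemma comp_conv2 : ps_conv g t -> ps_conv (ps_comp f g) t ->
  ps_conv f (PhiR g t) /\ PhiR f (PhiR g t) <= PhiR (ps_comp f g) t.
Proof.
  intros Hcg Hcc. apply ps_conv_bounded; auto.
  - apply PhiR_nonneg; auto.
  - intros K. apply (lim_le_const (fun M => sum_f_R0 (fun k => f k * (sum_f_R0 (term g t) M) ^ k) K)).
    + unfold term at 2. apply lim_poly. apply PhiR_spec; auto.
    + intros M. apply comp_lower; auto.
Qed.

Lemma comp_value : ps_conv g t -> ps_conv f (PhiR g t) ->
  ps_conv (ps_comp f g) t /\ PhiR (ps_comp f g) t = PhiR f (PhiR g t).
Proof.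
  intros H1 H2. destruct (comp_conv H1 H2) as [H3 H4]. split; auto.
  destruct (comp_conv2 H1 H3). lra.
Qed.

End Comp.

Lemma term_le_sum (f : nat -> R) i N : (forall k, 0 <= f k) -> (i <= N)%nat -> f i <= sum_f_R0 f N.
Proof.
  intros Hf Hi. eapply Rle_trans; [|apply (sum_mono_idx f i N); auto].
  destruct i; simpl. lra. generalize (sum_nonneg_le f i (fun k _ => Hf k)). lra.
Qed.

Lemma strict_mono a x x' : (forall n, 0 <= a n) -> 0 <= x < x' -> ps_conv a x' ->
  ps_conv a x /\ PhiR a x + a 1%nat * (x' - x) <= PhiR a x'.
Proof.
  intros Ha Hx Hc.
  destruct (conv_mono_t a x x' Ha ltac:(lra) Hc) as [Hcx _]. split; auto.
  set (u := fun n => term a x' n - term a x n).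
  assert (Hu : infinite_sum u (PhiR a x' - PhiR a x)).
  { unfold infinite_sum. apply is_lim_seq_Reals.
    apply (is_lim_seq_ext (fun N => sum_f_R0 (term a x') N - sum_f_R0 (term a x) N)).
    - intros N. unfold u. rewrite minus_sum. auto.
    - apply is_lim_seq_minus'; apply is_lim_seq_Reals; apply PhiR_spec; auto. }
  assert (Hun : forall n, 0 <= u n).
  { intros n. unfold u, term. assert (x ^ n <= x' ^ n) by (apply pow_incr; lra).
    generalize (Ha n); nra. }
  pose proof (sum_incr u 1 _ Hu Hun). simpl in H. unfold u, term in H. simpl in H. lra.
Qed.

Lemma one_conv_lt y : 0 <= y -> ps_conv (fun _ => 1) y -> y < 1.
Proof.
  intros Hy Hc. destruct (Rlt_or_le y 1) as [H|H]; auto. exfalso.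
  destruct (INR_unbounded (PhiR (fun _ => 1) y)) as [N HN].
  assert (Hs : forall N, INR N + 1 <= sum_f_R0 (term (fun _ => 1) y) N).
  { induction N0 as [|N0 IH]; cbn [sum_f_R0]; unfold term.
    - simpl. lra.
    - rewrite S_INR. assert (1 <= y ^ S N0) by (apply pow_R1_Rle; lra).
      unfold term in IH. lra. }
  pose proof (partial_le (fun _ => 1) y N (fun _ => Rle_0_1) Hy Hc).
  specialize (Hs N). lra.
Qed.

Lemma one_value y : 0 <= y < 1 -> ps_conv (fun _ => 1) y /\ PhiR (fun _ => 1) y = 1 / (1 - y).
Proof.
  intros Hy. assert (H := GP_infinite y ltac:(rewrite Rabs_pos_eq; lra)).
  unfold Pser in H. split. exists (/ (1 - y)). exact H.
  rewrite (PhiR_eq _ _ _ H). field. lra.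
Qed.

Section DSeries.
Variables (F d : ps).
Hypotheses (HW : weight_seq F) (HD : is_D_series F d).

Lemma HF : forall n, 0 <= F n. Proof. apply HW. Qed.
Lemma Hd : forall n, 0 <= d n. Proof. apply (d_nonneg F d HF HD). Qed.
Lemma Hd0 : d O = 0. Proof. apply HD. Qed.
Lemma HF0 : 0 < F O. Proof. apply HW. Qed.

Lemma comp_nonneg : forall n, 0 <= ps_comp F d n.
Proof.
  intros n. unfold ps_comp. apply sum_nonneg_le. intros k _. apply Rmult_le_pos. apply HF.
  apply ps_pow_nonneg. apply Hd.
Qed.

Lemma d_partial_shift x N :
  sum_f_R0 (term d x) (S N) = x * sum_f_R0 (term (ps_comp F d) x) N.
Proof.
  rewrite sum_shift. unfold term at 1. rewrite Hd0, Rmult_0_l, Rplus_0_l.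
  rewrite <- sum_mult_l. apply sum_eq. intros i _. unfold term.
  destruct HD as [_ Hs]. rewrite Hs. simpl. ring.
Qed.

Lemma DU y x : 0 <= y -> ps_conv F y -> 0 <= x -> x * PhiR F y <= y ->
  ps_conv d x /\ PhiR d x <= y.
Proof.
  intros Hy Hc Hx Hxy. apply ps_conv_bounded; auto. apply Hd.
  intros N. induction N as [|N IH].
  - simpl. unfold term. rewrite Hd0. lra.
  - rewrite d_partial_shift.
    apply Rle_trans with (x * PhiR F y); auto.
    apply Rmult_le_compat_l; auto.
    eapply Rle_trans; [apply comp_upper; auto; try apply HF; try apply Hd; apply Hd0|].
    eapply Rle_trans; [|apply (partial_le F y N HF Hy Hc)].
    apply sum_Rle. intros k _. unfold term. apply Rmult_le_compat_l. apply HF.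
    apply pow_incr. split; auto. apply sum_nonneg_le. intros; apply term_nonneg; auto. apply Hd.
Qed.

Lemma Dfix x : 0 <= x -> ps_conv d x ->
  ps_conv F (PhiR d x) /\ PhiR d x = x * PhiR F (PhiR d x).
Proof.
  intros Hx Hc. destruct (Req_dec x 0) as [->|Hx0].
  - assert (E : PhiR d 0 = 0).
    { apply PhiR_eq. replace 0 with (sum_f_R0 (term d 0) 0) at 2 by (simpl; unfold term; rewrite Hd0; ring).
      apply finite_support_sum. intros n Hn. unfold term. destruct n; [lia|]. simpl. ring. }
    rewrite E. split; [|ring].
    exists (sum_f_R0 (term F 0) 0). apply finite_support_sum. intros n Hn. unfold term.
    destruct n; [lia|]. simpl. ring.
  - assert (Hxp : 0 < x) by lra.
    assert (Hcc : ps_conv (ps_comp F d) x /\ PhiR (ps_comp F d) x <= PhiR d x / x).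
    { apply ps_conv_bounded; auto. apply comp_nonneg.
      intros N. apply (Rmult_le_reg_l x); auto. field_simplify; [|lra].
      rewrite <- d_partial_shift. apply partial_le; auto. apply Hd. }
    destruct Hcc as [Hcc _].
    destruct (comp_conv2 F d x HF Hd Hd0 Hx Hc Hcc) as [HcF _].
    split; auto.
    destruct (comp_value F d x HF Hd Hd0 Hx Hc HcF) as [_ Hv]. rewrite <- Hv.
    assert (L1 := PhiR_spec d x Hc). assert (L2 := PhiR_spec _ x Hcc).
    apply is_lim_seq_Reals in L1. apply is_lim_seq_Reals in L2.
    apply is_lim_seq_incr_1 in L1.
    apply (is_lim_seq_scal_l _ x) in L2.
    apply (is_lim_seq_ext _ (fun n => sum_f_R0 (term d x) (S n))) in L2;
      [|intros n; symmetry; apply d_partial_shift].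
    apply is_lim_seq_unique in L1. apply is_lim_seq_unique in L2.
    rewrite L1 in L2. simpl in L2. injection L2. auto.
Qed.

Lemma D_lower x : 0 <= x -> ps_conv d x -> x * F O <= PhiR d x.
Proof.
  intros Hx Hc. apply (conv_ge_partial d x _ 1 Hd Hx Hc). simpl. unfold term.
  rewrite Hd0, (d_one F d HD). simpl. lra.
Qed.

Lemma D_strict x x' : 0 <= x < x' -> ps_conv d x' -> PhiR d x < PhiR d x'.
Proof.
  intros Hx Hc. destruct (strict_mono d x x' Hd Hx Hc) as [_ H].
  rewrite (d_one F d HD) in H. assert (0 < F O * (x' - x)) by (apply Rmult_lt_0_compat; [apply HF0|lra]).
  lra.
Qed.

Lemma phi_eq : phi_of d = ps_comp (fun _ => 1) d.
Proof. apply functional_extensionality. apply phi_of_comp. Qed.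

Lemma phi_nonneg : forall n, 0 <= phi_of d n.
Proof.
  intros n. unfold phi_of. apply sum_nonneg_le. intros k _. apply ps_pow_nonneg. apply Hd.
Qed.

Lemma d_le_phi : forall n, 0 <= d n <= phi_of d n.
Proof.
  intros n. split. apply Hd. destruct n as [|n].
  - rewrite Hd0. apply phi_nonneg.
  - unfold phi_of. rewrite <- (ps_pow_1 d (S n)).
    apply (term_le_sum (fun k => ps_pow d k (S n)) 1 (S n)).
    + intros k. apply ps_pow_nonneg. apply Hd.
    + lia.
Qed.

Lemma phi_conv_iff x : 0 <= x ->
  (ps_conv (phi_of d) x <-> ps_conv d x /\ PhiR d x < 1).
Proof.
  intros Hx. rewrite phi_eq. split.
  - intros Hc. assert (Hcd : ps_conv d x).
    { rewrite <- phi_eq in Hc. apply (conv_mono_coef d (phi_of d) x d_le_phi Hx Hc). }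
    split; auto. apply one_conv_lt. apply PhiR_nonneg; auto. apply Hd.
    apply (comp_conv2 (fun _ => 1) d x (fun _ => Rle_0_1) Hd Hd0 Hx Hcd Hc).
  - intros [Hcd Hlt]. assert (H0 : 0 <= PhiR d x) by (apply PhiR_nonneg; auto; apply Hd).
    destruct (one_value (PhiR d x) ltac:(lra)) as [Ho _].
    apply (comp_conv (fun _ => 1) d x (fun _ => Rle_0_1) Hd Hd0 Hx Hcd Ho).
Qed.

Lemma phi_value x : 0 <= x -> ps_conv d x -> PhiR d x < 1 ->
  PhiR (phi_of d) x = 1 / (1 - PhiR d x).
Proof.
  intros Hx Hcd Hlt. rewrite phi_eq. assert (H0 : 0 <= PhiR d x) by (apply PhiR_nonneg; auto; apply Hd).
  destruct (one_value (PhiR d x) ltac:(lra)) as [Ho Hv].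
  rewrite <- Hv. apply (comp_value (fun _ => 1) d x (fun _ => Rle_0_1) Hd Hd0 Hx Hcd Ho).
Qed.

End DSeries.

Lemma locally_R x e (P : R -> Prop) : 0 < e -> (forall y, Rabs (y - x) < e -> P y) -> locally x P.
Proof.
  intros He H. exists (mkposreal e He). intros y Hy. apply H.
  unfold ball in Hy; simpl in Hy; unfold AbsRing_ball, abs, minus, plus, opp in Hy; simpl in Hy.
  exact Hy.
Qed.

Lemma PSeries_spec a t : Rbar_lt (Rabs t) (CV_radius a) ->
  infinite_sum (term a t) (PSeries a t).
Proof.
  intros H. apply CV_radius_inside in H. apply is_pseries_term.
  unfold PSeries. destruct H as [l Hl].
  assert (Hs : is_series (fun k => a k * t ^ k) l).
  { apply is_pseries_term in Hl. apply is_series_Reals. exact Hl. }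
  apply is_pseries_term. apply is_series_Reals.
  rewrite (is_series_unique _ _ Hs). exact Hs.
Qed.

Lemma PhiR_PSeries a t : Rbar_lt (Rabs t) (CV_radius a) ->
  ps_conv a t /\ PhiR a t = PSeries a t.
Proof.
  intros H. pose proof (PSeries_spec a t H). split. exists (PSeries a t); auto.
  apply PhiR_eq; auto.
Qed.

Lemma tD_sum a t : Rbar_lt (Rabs t) (CV_radius a) ->
  infinite_sum (fun n => INR n * a n * t ^ n) (t * PSeries (PS_derive a) t).
Proof.
  intros H. rewrite <- CV_radius_derive in H. apply PSeries_spec in H.
  unfold infinite_sum. apply is_lim_seq_Reals. apply is_lim_seq_incr_1.
  apply (is_lim_seq_ext (fun N => t * sum_f_R0 (term (PS_derive a) t) N)).
  - intros N. rewrite sum_shift. simpl. rewrite Rmult_0_l, Rmult_0_l, Rplus_0_l.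
    rewrite <- sum_mult_l. apply sum_eq. intros i _. unfold term, PS_derive. simpl. ring.
  - apply (is_lim_seq_scal_l _ t (Finite _)). apply is_lim_seq_Reals. exact H.
Qed.

Lemma tDPhiR_eq a t : Rbar_lt (Rabs t) (CV_radius a) ->
  tDPhiR a t = t * PSeries (PS_derive a) t.
Proof. intros H. apply sumR_eq. apply tD_sum; auto. Qed.

Lemma Psi_eq a t : Rbar_lt (Rabs t) (CV_radius a) ->
  Psi a t = t * PSeries (PS_derive a) t / PSeries a t.
Proof.
  intros H. unfold Psi. rewrite tDPhiR_eq by auto. destruct (PhiR_PSeries a t H) as [_ ->]. auto.
Qed.

Lemma PSeries_nonneg a t : (forall n, 0 <= a n) -> 0 <= t -> Rbar_lt (Rabs t) (CV_radius a) ->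
  0 <= PSeries a t.
Proof.
  intros Ha Ht H. destruct (PhiR_PSeries a t H) as [Hc <-]. apply PhiR_nonneg; auto.
Qed.

Lemma PS_derive_nonneg a : (forall n, 0 <= a n) -> forall n, 0 <= PS_derive a n.
Proof. intros Ha n. unfold PS_derive. apply Rmult_le_pos. apply pos_INR. apply Ha. Qed.

Lemma rad_abs a y r : (forall n, 0 <= a n) -> Rabs y < r -> ps_conv a r ->
  Rbar_lt (Rabs y) (CV_radius a).
Proof.
  intros Ha Hy Hc. rewrite <- (Rabs_Rabsolu y). apply (conv_radius a (Rabs y) r Ha); auto.
  split; auto. apply Rabs_pos.
Qed.

Lemma F_ge_F0 F t : (forall n, 0 <= F n) -> 0 <= t -> ps_conv F t -> F O <= PhiR F t.
Proof.
  intros HF Ht Hc. apply (conv_ge_partial F t _ 0 HF Ht Hc). simpl. unfold term. simpl. lra.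
Qed.

Section DDeriv.
Variables (F d : ps).
Hypotheses (HW : weight_seq F) (HD : is_D_series F d).

Lemma Psi_phi_formula x x' : 0 < x < x' -> ps_conv (phi_of d) x' ->
  0 < PhiR d x < 1 /\ 0 <= Psi F (PhiR d x) < 1 /\
  Psi (phi_of d) x = PhiR d x / ((1 - PhiR d x) * (1 - Psi F (PhiR d x))).
Proof.
  intros Hx Hc'.
  pose proof (HF F HW) as HFn. pose proof (Hd F d HW HD) as Hdn.
  pose proof (phi_nonneg F d HW HD) as Hpn.
  destruct (proj1 (phi_conv_iff F d HW HD x' ltac:(lra)) Hc') as [Hcd' Hlt'].
  assert (HrD : forall y, Rabs y < x' -> Rbar_lt (Rabs y) (CV_radius d))
    by (intros; eapply rad_abs; eauto).
  assert (HrP : forall y, Rabs y < x' -> Rbar_lt (Rabs y) (CV_radius (phi_of d)))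
    by (intros; eapply rad_abs; eauto).
  destruct (Dfix F d HW HD x' ltac:(lra) Hcd') as [HcF' _].
  assert (Hy : forall y, 0 <= y < x' ->
     ps_conv d y /\ PSeries d y = PhiR d y /\ PhiR d y < PhiR d x' /\
     Rbar_lt (Rabs (PhiR d y)) (CV_radius F) /\ 0 <= PhiR d y /\
     PSeries F (PhiR d y) = PhiR F (PhiR d y) /\
     PhiR d y = y * PhiR F (PhiR d y) /\
     PSeries (phi_of d) y = / (1 - PhiR d y)).
  { intros y Hy.
    assert (Hry : Rabs y < x') by (rewrite Rabs_pos_eq; lra).
    destruct (PhiR_PSeries d y (HrD y Hry)) as [Hcy Ey].
    assert (Hs : PhiR d y < PhiR d x') by (apply (D_strict F d HW HD); auto).
    assert (H0 : 0 <= PhiR d y) by (apply PhiR_nonneg; auto; lra).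
    assert (HrF : Rbar_lt (Rabs (PhiR d y)) (CV_radius F)) by (eapply rad_abs; eauto; rewrite Rabs_pos_eq; lra).
    destruct (PhiR_PSeries F _ HrF) as [_ EF].
    destruct (Dfix F d HW HD y ltac:(lra) Hcy) as [_ Efix].
    destruct (PhiR_PSeries (phi_of d) y (HrP y Hry)) as [_ Ep].
    rewrite (phi_value F d HW HD y) in Ep; auto; try lra.
    repeat split; auto; try lra. all: try (rewrite <- Ep; field; lra). }
  destruct (Hy x ltac:(lra)) as (Hcx & ED & HsD & HrF & HD0 & EF & Efix & EP).
  set (Dx := PhiR d x) in *.
  set (D' := PSeries (PS_derive d) x).
  set (F' := PSeries (PS_derive F) Dx).
  set (P' := PSeries (PS_derive (phi_of d)) x).
  assert (Hrx : Rabs x < x') by (rewrite Rabs_pos_eq; lra).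
  assert (HdD : is_derive (PSeries d) x D') by (apply is_derive_PSeries; auto).
  assert (HdF : is_derive (PSeries F) (PSeries d x) F') by (rewrite ED; apply is_derive_PSeries; auto).
  assert (HdP : is_derive (PSeries (phi_of d)) x P') by (apply is_derive_PSeries; auto).
  assert (Hloc : locally x (fun y => 0 <= y < x')).
  { apply (locally_R x (Rmin x (x' - x))). apply Rmin_pos; lra.
    intros y Hy'. apply Rabs_lt_between in Hy'. destruct Hy' as [H1 H2].
    assert (Rmin x (x' - x) <= x) by apply Rmin_l.
    assert (Rmin x (x' - x) <= x' - x) by apply Rmin_r. lra. }
  assert (HdD2 : is_derive (PSeries d) x (1 * PSeries F (PSeries d x) + x * (D' * F'))).
  { pose proof (is_derive_comp (PSeries F) (PSeries d) x F' D' HdF HdD) as Hc.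
    pose proof (is_derive_mult (fun y => y) (fun y => PSeries F (PSeries d y)) x _ _ (is_derive_id x) Hc
      ltac:(intros; apply Rmult_comm)) as Hm.
    apply (is_derive_ext_loc (fun y => y * PSeries F (PSeries d y))); [|exact Hm].
    eapply filter_imp; [|exact Hloc]. intros y Hyy. simpl.
    destruct (Hy y Hyy) as (_ & E1 & _ & _ & _ & E2 & E3 & _). rewrite E1, E2. auto. }
  assert (ED' : D' = PSeries F Dx + x * (D' * F')).
  { apply is_derive_unique in HdD. apply is_derive_unique in HdD2. rewrite HdD in HdD2.
    rewrite ED in HdD2. lra. }
  assert (HdP2 : is_derive (PSeries (phi_of d)) x (- (0 - D') / (1 - PSeries d x) ^ 2)).
  { assert (H1 : is_derive (fun y => 1 - PSeries d y) x (0 - D')).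
    { pose proof (is_derive_minus (fun _ => 1) (PSeries d) x 0 D' (is_derive_const 1 x) HdD). exact H. }
    pose proof (is_derive_inv _ x _ H1 ltac:(cbv beta; rewrite ED; lra)) as Hi.
    apply (is_derive_ext_loc (fun y => / (1 - PSeries d y))); [|exact Hi].
    eapply filter_imp; [|exact Hloc]. intros y Hyy.
    destruct (Hy y Hyy) as (_ & E1 & _ & _ & _ & _ & _ & E4). rewrite E1, E4. auto. }
  assert (EP' : P' = D' / (1 - Dx) ^ 2).
  { apply is_derive_unique in HdP. apply is_derive_unique in HdP2. rewrite HdP in HdP2.
    rewrite HdP2, ED. field. lra. }
  assert (HFD : F O <= PSeries F Dx) by (rewrite EF; apply F_ge_F0; auto; destruct (Dfix F d HW HD x ltac:(lra) Hcx); auto).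
  pose proof (HF0 F HW) as HF0'.
  assert (HD'0 : 0 <= D').
  { apply PSeries_nonneg; [apply PS_derive_nonneg; auto|lra|]. rewrite CV_radius_derive. auto. }
  assert (HF'0 : 0 <= F').
  { apply PSeries_nonneg; [apply PS_derive_nonneg; auto|lra|]. rewrite CV_radius_derive. auto. }
  assert (HDpos : 0 < Dx).
  { pose proof (D_lower F d HW HD x ltac:(lra) Hcx). fold Dx in H. nra. }
  assert (Hlt1 : Dx < 1) by lra.
  assert (HxF : 0 < 1 - x * F').
  { destruct (Rle_or_lt (1 - x * F') 0) as [H|H]; auto.
    assert (D' * (1 - x * F') = PSeries F Dx) by nra.
    nra. }
  assert (EPsiF : Psi F Dx = x * F').
  { rewrite Psi_eq by auto. fold F'. rewrite <- EF in Efix. rewrite Efix at 1. field. lra. }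
  rewrite EPsiF.
  split; [lra|]. split; [split; nra|].
  rewrite Psi_eq by auto. fold P'. rewrite EP', EP.
  assert (Hprod : D' * (1 - x * F') = PSeries F Dx) by nra.
  assert (ED'' : D' = PSeries F Dx / (1 - x * F')) by (rewrite <- Hprod; field; lra).
  rewrite <- EF in Efix.
  rewrite ED''. transitivity (x * PSeries F Dx / ((1 - Dx) * (1 - x * F'))).
  - field. repeat split; lra.
  - rewrite <- Efix. reflexivity.
Qed.

End DDeriv.

Section Radius.
Variables (F d : ps).
Hypotheses (HW : weight_seq F) (HD : is_D_series F d).

Lemma phi_radius_exists : (exists x0, 0 < x0 /\ ps_conv (phi_of d) x0) ->
  exists rho, 0 < rho /\ (forall x, 0 <= x < rho -> ps_conv (phi_of d) x) /\
    (forall x, rho < x -> ~ ps_conv (phi_of d) x).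
Proof.
  intros [x0 [Hx0 Hc0]].
  pose proof (HF0 F HW) as HF0'.
  set (E := fun x => 0 <= x /\ ps_conv (phi_of d) x).
  assert (Hb : bound E).
  { exists (1 / F O). intros x [Hx Hc].
    destruct (proj1 (phi_conv_iff F d HW HD x Hx) Hc) as [Hcd Hlt].
    pose proof (D_lower F d HW HD x Hx Hcd).
    apply (Rmult_le_reg_r (F O)); auto. field_simplify; lra. }
  destruct (completeness E Hb (ex_intro _ x0 (conj (Rlt_le _ _ Hx0) Hc0))) as [rho [Hub Hlub]].
  assert (Hr0 : x0 <= rho) by (apply Hub; split; auto; lra).
  exists rho. split; [lra|]. split.
  - intros x Hx.
    destruct (classic (exists z, E z /\ x < z)) as [[z [[Hz0 Hz] Hxz]]|Hn].
    + apply (conv_mono_t (phi_of d) x z (phi_nonneg F d HW HD)); auto. lra.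
    + assert (rho <= x). { apply Hlub. intros z Hz. destruct (Rle_or_lt z x); auto. exfalso; eauto. }
      lra.
  - intros x Hx Hc. assert (x <= rho) by (apply Hub; split; auto; lra). lra.
Qed.

Lemma small_conv (tau : ext) : is_radius F tau -> tau <> Fin 0 ->
  exists x0, 0 < x0 /\ ps_conv (phi_of d) x0.
Proof.
  intros Hr Hne.
  assert (Hy : exists y, 0 < y < 1 /\ ps_conv F y).
  { destruct tau as [t|].
    - destruct Hr as [Ht [Hin _]]. assert (t <> 0) by (intros ->; apply Hne; auto).
      exists (Rmin (1/2) (t/2)). assert (Rmin (1/2) (t/2) <= 1/2) by apply Rmin_l.
      assert (Rmin (1/2) (t/2) <= t/2) by apply Rmin_r.
      assert (0 < Rmin (1/2) (t/2)) by (apply Rmin_pos; lra).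
      split. lra. apply Hin. lra.
    - exists (1/2). split. lra. apply Hr. lra. }
  destruct Hy as [y [Hy Hc]].
  pose proof (HF0 F HW) as HF0'.
  assert (HFy : F O <= PhiR F y) by (apply F_ge_F0; auto; [apply HF; auto|lra]).
  exists (y / PhiR F y). split. apply Rdiv_lt_0_compat; lra.
  destruct (DU F d HW HD y (y / PhiR F y) ltac:(lra) Hc) as [Hcd Hle].
  { apply Rlt_le, Rdiv_lt_0_compat; lra. }
  { right. field. lra. }
  assert (Hx0 : 0 <= y / PhiR F y) by (apply Rlt_le, Rdiv_lt_0_compat; lra).
  apply (proj2 (phi_conv_iff F d HW HD _ Hx0)). split; auto. lra.
Qed.

End Radius.

Lemma pow_diff a b n : 0 <= a <= b -> b * (b ^ n - a ^ n) <= INR n * (b - a) * b ^ n.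
Proof.
  intros Hab. induction n as [|n IH].
  - simpl. lra.
  - rewrite S_INR. simpl.
    assert (Han : a ^ n <= b ^ n) by (apply pow_incr; lra).
    assert (Ha0 : 0 <= a ^ n) by (apply pow_le; lra).
    assert (H1 : b * (b * (b ^ n - a ^ n)) <= b * (INR n * (b - a) * b ^ n)) by (apply Rmult_le_compat_l; lra).
    assert (H2 : b * a ^ n * (b - a) <= b * b ^ n * (b - a)).
    { apply Rmult_le_compat_r. lra. apply Rmult_le_compat_l; lra. }
    assert (E : b * (b * b ^ n - a * a ^ n) = b * (b * (b ^ n - a ^ n)) + b * a ^ n * (b - a)) by ring.
    rewrite E. nra.
Qed.

Lemma cont_eps f x0 : continuity_pt f x0 ->
  forall eps, 0 < eps -> exists alp, 0 < alp /\ forall x, Rabs (x - x0) < alp -> Rabs (f x - f x0) < eps.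
Proof.
  intros Hc eps Heps. destruct (Hc eps Heps) as [alp [Halp Hf]]. exists alp. split; auto.
  intros x Hx. destruct (Req_dec x x0) as [->|Hne].
  - rewrite Rminus_diag, Rabs_R0. auto.
  - apply Hf. split. split. exact I. auto. simpl. unfold R_dist. auto.
Qed.

Section Analysis.
Variables (F d : ps) (rho : R).
Hypotheses (HW : weight_seq F) (HD : is_D_series F d) (Hr0 : 0 < rho)
  (Hin : forall x, 0 <= x < rho -> ps_conv (phi_of d) x)
  (Hout : forall x, rho < x -> ~ ps_conv (phi_of d) x).

Lemma Dc x : 0 <= x < rho ->
  ps_conv d x /\ PhiR d x < 1 /\ ps_conv F (PhiR d x) /\
  PhiR d x = x * PhiR F (PhiR d x) /\ 0 <= PhiR d x.
Proof.
  intros Hx. destruct (proj1 (phi_conv_iff F d HW HD x ltac:(lra)) (Hin x Hx)) as [Hc Hl].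
  destruct (Dfix F d HW HD x ltac:(lra) Hc) as [H1 H2].
  repeat split; auto. apply PhiR_nonneg; auto. apply (Hd F d HW HD). lra.
Qed.

Lemma Dmono x y : 0 <= x < y -> y < rho -> PhiR d x < PhiR d y.
Proof.
  intros Hxy Hy. apply (D_strict F d HW HD); auto. apply Dc; lra.
Qed.

Lemma Dpos x : 0 < x < rho -> 0 < PhiR d x.
Proof.
  intros Hx. destruct (Dc 0 ltac:(lra)) as (_ & _ & _ & _ & H0).
  pose proof (Dmono 0 x ltac:(lra) ltac:(lra)). lra.
Qed.

Lemma PsiForm x : 0 < x < rho ->
  0 < PhiR d x < 1 /\ 0 <= Psi F (PhiR d x) < 1 /\
  Psi (phi_of d) x = PhiR d x / ((1 - PhiR d x) * (1 - Psi F (PhiR d x))).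
Proof.
  intros Hx. apply (Psi_phi_formula F d HW HD x ((x + rho) / 2)). lra.
  apply Hin. lra.
Qed.

Lemma delta_exists : exists delta, 0 < delta <= 1 /\
  (forall x, 0 <= x < rho -> PhiR d x < delta) /\
  (forall eta, 0 < eta -> exists del, 0 < del <= rho /\
      forall x, rho - del < x < rho -> delta - eta < PhiR d x).
Proof.
  set (E := fun v => exists x, 0 <= x < rho /\ v = PhiR d x).
  assert (Hb : bound E).
  { exists 1. intros v [x [Hx ->]]. destruct (Dc x Hx) as (_ & H & _). lra. }
  destruct (completeness E Hb (ex_intro _ (PhiR d 0) (ex_intro _ 0 (conj (conj (Rle_refl 0) Hr0) eq_refl))))
    as [delta [Hub Hlub]].
  exists delta. split; [split|split].
  - pose proof (Dpos (rho/2) ltac:(lra)).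
    assert (PhiR d (rho/2) <= delta) by (apply Hub; exists (rho/2); split; auto; lra). lra.
  - apply Hlub. intros v [x [Hx ->]]. destruct (Dc x Hx) as (_ & H & _). lra.
  - intros x Hx. pose proof (Dmono x ((x + rho)/2) ltac:(lra) ltac:(lra)).
    assert (PhiR d ((x + rho)/2) <= delta) by (apply Hub; exists ((x+rho)/2); split; auto; lra). lra.
  - intros eta Heta.
    destruct (classic (exists x0, 0 <= x0 < rho /\ delta - eta < PhiR d x0)) as [[x0 [Hx0 Hlt]]|Hn].
    + exists (rho - x0). split. lra.
      intros x Hx. destruct (Req_dec x x0) as [->|Hne]; auto.
      assert (x0 < x) by lra. pose proof (Dmono x0 x ltac:(lra) ltac:(lra)). lra.
    + exfalso. assert (delta <= delta - eta); [|lra].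
      apply Hlub. intros v [x [Hx ->]]. destruct (Rle_or_lt (PhiR d x) (delta - eta)); auto.
      exfalso. apply Hn. eauto.
Qed.

Lemma inf_generic :
  (forall eps, 0 < eps -> exists del, 0 < del /\ forall x, rho - del < x < rho ->
     (1 - PhiR d x) * (1 - Psi F (PhiR d x)) < eps) ->
  left_lim (Fin rho) (Psi (phi_of d)) PInf.
Proof.
  intros H M. set (c := PhiR d (rho / 2)).
  assert (Hc : 0 < c) by (apply Dpos; lra).
  destruct (H (c / (Rabs M + 1))) as [del [Hdel Hq]].
  { apply Rdiv_lt_0_compat; auto. pose proof (Rabs_pos M); lra. }
  exists (Rmin del (rho / 2)). split. apply Rmin_pos; lra.
  intros x Hx. assert (Rmin del (rho/2) <= del) by apply Rmin_l.
  assert (Rmin del (rho/2) <= rho/2) by apply Rmin_r.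
  destruct (PsiForm x ltac:(lra)) as (HD1 & HP1 & ->).
  specialize (Hq x ltac:(lra)).
  assert (Hcx : c < PhiR d x) by (apply Dmono; lra).
  set (q := (1 - PhiR d x) * (1 - Psi F (PhiR d x))) in *.
  assert (Hq0 : 0 < q) by (unfold q; apply Rmult_lt_0_compat; lra).
  apply (Rmult_lt_reg_r q); auto. unfold Rdiv. rewrite Rmult_assoc, Rinv_l, Rmult_1_r by lra.
  assert (Hm : M * q <= Rabs M * q) by (apply Rmult_le_compat_r; [lra|apply Rle_abs]).
  assert (Rabs M * q <= Rabs M * (c / (Rabs M + 1))) by (apply Rmult_le_compat_l; [apply Rabs_pos|lra]).
  assert (Rabs M * (c / (Rabs M + 1)) < c).
  { pose proof (Rabs_pos M). apply (Rmult_lt_reg_r (Rabs M + 1)). lra.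
    field_simplify; lra. }
  lra.
Qed.

Lemma inf_psi1 :
  (forall eps, 0 < eps -> exists del, 0 < del /\ forall x, rho - del < x < rho ->
     1 - eps < Psi F (PhiR d x)) ->
  left_lim (Fin rho) (Psi (phi_of d)) PInf.
Proof.
  intros H. apply inf_generic. intros eps Heps. destruct (H eps Heps) as [del [Hdel Hp]].
  exists (Rmin del rho). split. apply Rmin_pos; lra. intros x Hx.
  assert (Rmin del rho <= del) by apply Rmin_l. assert (Rmin del rho <= rho) by apply Rmin_r.
  destruct (PsiForm x ltac:(lra)) as (HD1 & HP1 & _). specialize (Hp x ltac:(lra)).
  assert ((1 - PhiR d x) * (1 - Psi F (PhiR d x)) <= 1 - Psi F (PhiR d x)).
  { rewrite <- (Rmult_1_l (1 - Psi F (PhiR d x))) at 2. apply Rmult_le_compat_r; lra. }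
  lra.
Qed.


Variable delta : R.
Hypotheses (Hdl : 0 < delta <= 1)
  (Hdlt : forall x, 0 <= x < rho -> PhiR d x < delta)
  (Happ : forall eta, 0 < eta -> exists del, 0 < del <= rho /\
      forall x, rho - del < x < rho -> delta - eta < PhiR d x).

Lemma inf_delta1 : delta = 1 -> left_lim (Fin rho) (Psi (phi_of d)) PInf.
Proof.
  intros Hd1. apply inf_generic. intros eps Heps. destruct (Happ eps Heps) as [del [Hdel Hp]].
  exists del. split. lra. intros x Hx.
  destruct (PsiForm x ltac:(lra)) as (HD1 & HP1 & _). specialize (Hp x Hx).
  assert ((1 - PhiR d x) * (1 - Psi F (PhiR d x)) <= 1 - PhiR d x).
  { rewrite <- (Rmult_1_r (1 - PhiR d x)) at 2. apply Rmult_le_compat_l; lra. }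
  lra.
Qed.

Lemma lim_D : left_lim (Fin rho) (PhiR d) (Fin delta).
Proof.
  intros eps Heps. destruct (Happ eps Heps) as [del [Hdel Hp]]. exists del. split. lra.
  intros x Hx. specialize (Hp x Hx). assert (PhiR d x < delta) by (apply Hdlt; lra).
  rewrite Rabs_left; lra.
Qed.

Lemma comp_left_lim L : left_lim (Fin delta) (Psi F) L ->
  left_lim (Fin rho) (fun x => Psi F (PhiR d x)) L.
Proof.
  destruct L as [l|]; simpl.
  - intros H eps Heps. destruct (H eps Heps) as [del1 [Hdel1 H1]].
    destruct (Happ del1 Hdel1) as [del [Hdel Hp]]. exists del. split. lra.
    intros x Hx. apply H1. split. apply Hp; auto. apply Hdlt. lra.
  - intros H M. destruct (H M) as [del1 [Hdel1 H1]].
    destruct (Happ del1 Hdel1) as [del [Hdel Hp]]. exists del. split. lra.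
    intros x Hx. apply H1. split. apply Hp; auto. apply Hdlt. lra.
Qed.


Lemma beyond : delta < 1 -> (exists y1, delta < y1 /\ ps_conv F y1) ->
  forall eps, 0 < eps -> exists del, 0 < del /\
    forall x, rho - del < x < rho -> 1 - eps < Psi F (PhiR d x).
Proof.
  intros Hd1 [y1 [Hy1 Hc1]].
  pose proof (HF F HW) as HFn. pose proof (HF0 F HW) as HF0'.
  assert (Hrad : forall y, Rabs y < y1 -> Rbar_lt (Rabs y) (CV_radius F))
    by (intros; eapply rad_abs; eauto).
  assert (Hdpos : 0 < delta) by lra.
  assert (Hrd : Rbar_lt (Rabs delta) (CV_radius F)) by (apply Hrad; rewrite Rabs_pos_eq; lra).
  set (A := PSeries F delta).
  assert (HA : F O <= A).
  { destruct (PhiR_PSeries F delta Hrd) as [Hcd EA]. unfold A. rewrite <- EA.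
    apply F_ge_F0; auto; lra. }
  assert (Hcont := PSeries_continuity F delta Hrd).
  assert (HDx : forall x, 0 < x < rho -> 0 <= PhiR d x /\ PhiR d x < delta /\
             PhiR d x = x * PSeries F (PhiR d x)).
  { intros x Hx. destruct (Dc x ltac:(lra)) as (_ & _ & _ & Efix & H0).
    assert (Hlt : PhiR d x < delta) by (apply Hdlt; lra).
    destruct (PhiR_PSeries F (PhiR d x)) as [_ E].
    { apply Hrad. rewrite Rabs_pos_eq; lra. }
    rewrite <- E. auto. }
  assert (HrA : rho * A <= delta).
  { destruct (Rle_or_lt (rho * A) delta) as [H|H]; auto. exfalso.
    assert (Hdr : delta / rho < A).
    { apply (Rmult_lt_reg_r rho); auto. unfold Rdiv. rewrite Rmult_assoc, Rinv_l, Rmult_1_r by lra. lra. }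
    set (e1 := (A - delta / rho) / 2).
    assert (He1 : 0 < e1) by (unfold e1; lra).
    destruct (cont_eps _ _ Hcont e1 He1) as [eta [Heta Hce]].
    destruct (Happ eta Heta) as [del [Hdel Hp]].
    set (B1 := A - e1).
    assert (HB1 : delta / rho < B1) by (unfold B1, e1; lra).
    assert (HB1p : 0 < B1) by (assert (0 <= delta / rho) by (apply Rle_mult_inv_pos; lra); lra).
    assert (Hdb : delta / B1 < rho).
    { apply (Rmult_lt_reg_r B1); auto. unfold Rdiv. rewrite Rmult_assoc, Rinv_l, Rmult_1_r by lra.
      apply (Rmult_lt_reg_r (/ rho)). apply Rinv_0_lt_compat; lra.
      replace (rho * B1 * / rho) with B1 by (field; lra). exact HB1. }
    set (x := Rmax (rho - del/2) ((rho + delta / B1)/2)).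
    assert (Hx1 : rho - del/2 <= x) by apply Rmax_l.
    assert (Hx2 : (rho + delta / B1)/2 <= x) by apply Rmax_r.
    assert (Hx3 : x < rho) by (unfold x; apply Rmax_lub_lt; lra).
    assert (Hx0 : 0 < x) by (assert (0 <= delta / B1) by (apply Rle_mult_inv_pos; lra); lra).
    destruct (HDx x ltac:(lra)) as (H0 & Hlt & Efix).
    specialize (Hp x ltac:(lra)).
    assert (Hcl : Rabs (PSeries F (PhiR d x) - A) < e1).
    { apply Hce. rewrite Rabs_left; lra. }
    assert (HFg : B1 < PSeries F (PhiR d x)) by (unfold B1; apply Rabs_lt_between in Hcl; lra).
    assert (Hxb : delta < x * B1).
    { assert (delta / B1 < x) by lra.
      apply (Rmult_lt_reg_r (/ B1)). apply Rinv_0_lt_compat; lra.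
      replace (x * B1 * / B1) with x by (field; lra). exact H1. }
    assert (x * B1 <= x * PSeries F (PhiR d x)) by (apply Rmult_le_compat_l; lra).
    lra. }
  assert (Hdd : forall y, delta < y < Rmin 1 y1 -> y * A <= delta * PhiR F y).
  { intros y Hy. assert (Rmin 1 y1 <= 1) by apply Rmin_l. assert (Rmin 1 y1 <= y1) by apply Rmin_r.
    assert (Hcy : ps_conv F y) by (apply (conv_mono_t F y y1); auto; lra).
    assert (HFy : F O <= PhiR F y) by (apply F_ge_F0; auto; lra).
    destruct (Rle_or_lt (y * A) (delta * PhiR F y)) as [Hq|Hq]; auto. exfalso.
    assert (Hrf : rho * PhiR F y < y).
    { assert (rho * A * PhiR F y <= delta * PhiR F y) by (apply Rmult_le_compat_r; lra).
      apply (Rmult_lt_reg_r A). lra. nra. }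
    set (x := y / PhiR F y).
    assert (Hx : rho < x).
    { unfold x. apply (Rmult_lt_reg_r (PhiR F y)). lra. unfold Rdiv.
      rewrite Rmult_assoc, Rinv_l, Rmult_1_r by lra. lra. }
    assert (Hx0 : 0 <= x) by lra.
    destruct (DU F d HW HD y x ltac:(lra) Hcy Hx0) as [Hcdx Hle].
    { right. unfold x. field. lra. }
    apply (Hout x Hx). apply (proj2 (phi_conv_iff F d HW HD x Hx0)). split; auto. lra. }
  set (B := fun y => y * PSeries (PS_derive F) y).
  assert (He : forall y, delta < y < Rmin 1 y1 -> A <= B y).
  { intros y Hy. assert (Rmin 1 y1 <= 1) by apply Rmin_l. assert (Rmin 1 y1 <= y1) by apply Rmin_r.
    assert (Hry : Rbar_lt (Rabs y) (CV_radius F)) by (apply Hrad; rewrite Rabs_pos_eq; lra).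
    pose proof (tD_sum F y Hry) as HB.
    destruct (PhiR_PSeries F y Hry) as [Hcy EFy].
    pose proof (PSeries_spec F delta Hrd) as HAs. fold A in HAs.
    assert (Hser : y * (PhiR F y - A) <= (y - delta) * B y).
    { apply (lim_le_lim (fun N => y * (sum_f_R0 (term F y) N - sum_f_R0 (term F delta) N))
                        (fun N => (y - delta) * sum_f_R0 (fun n => INR n * F n * y ^ n) N)).
      - apply is_lim_seq_Reals. apply (is_lim_seq_scal_l _ y (Finite (PhiR F y - A))).
        apply is_lim_seq_minus'; apply is_lim_seq_Reals; auto. apply PhiR_spec; auto.
      - apply is_lim_seq_Reals. apply (is_lim_seq_scal_l _ (y - delta) (Finite (B y))).
        apply is_lim_seq_Reals; auto.
      - intros N. rewrite <- minus_sum, <- !sum_mult_l. apply sum_Rle. intros n _.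
        unfold term. pose proof (pow_diff delta y n ltac:(lra)).
        replace (y * (F n * y ^ n - F n * delta ^ n)) with (F n * (y * (y ^ n - delta ^ n))) by ring.
        replace ((y - delta) * (INR n * F n * y ^ n)) with (F n * (INR n * (y - delta) * y ^ n)) by ring.
        apply Rmult_le_compat_l; auto. }
    specialize (Hdd y Hy).
    assert (HAp : 0 < A) by lra.
    assert (Hk : y * A * (y - delta) <= delta * (y - delta) * B y).
    { assert (delta * (y * (PhiR F y - A)) <= delta * ((y - delta) * B y)) by (apply Rmult_le_compat_l; lra).
      nra. }
    assert (Hk2 : y * A <= delta * B y).
    { apply (Rmult_le_reg_r (y - delta)). lra. nra. }
    nra. }
  assert (HBc : continuity_pt B delta).
  { unfold B. apply (continuity_pt_mult id (PSeries (PS_derive F))).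
    - apply derivable_continuous_pt, derivable_pt_id.
    - apply PSeries_continuity. rewrite CV_radius_derive; auto. }
  assert (HBd : A <= B delta).
  { destruct (Rle_or_lt A (B delta)) as [H|H]; auto. exfalso.
    destruct (cont_eps B delta HBc (A - B delta) ltac:(lra)) as [eta [Heta Hce]].
    assert (Hm : delta < Rmin 1 y1) by (apply Rmin_glb_lt; lra).
    assert (0 < Rmin eta (Rmin 1 y1 - delta)) by (apply Rmin_pos; lra).
    assert (Rmin eta (Rmin 1 y1 - delta) <= eta) by apply Rmin_l.
    assert (Rmin eta (Rmin 1 y1 - delta) <= Rmin 1 y1 - delta) by apply Rmin_r.
    set (y := delta + Rmin eta (Rmin 1 y1 - delta) / 2).
    assert (Hy : delta < y < Rmin 1 y1) by (unfold y; lra).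
    specialize (He y Hy). assert (Hyd : Rabs (y - delta) < eta) by (rewrite Rabs_pos_eq; unfold y; lra).
    specialize (Hce y Hyd). apply Rabs_lt_between in Hce. lra. }
  set (Q := fun y => y * PSeries (PS_derive F) y / PSeries F y).
  assert (HQc : continuity_pt Q delta).
  { unfold Q. apply (continuity_pt_div (fun y => y * PSeries (PS_derive F) y) (PSeries F)).
    - exact HBc.
    - exact Hcont.
    - fold A. lra. }
  assert (HQ1 : 1 <= Q delta).
  { unfold Q. fold A. change (delta * PSeries (PS_derive F) delta) with (B delta).
    apply (Rmult_le_reg_r A). lra. unfold Rdiv. rewrite Rmult_assoc, Rinv_l, Rmult_1_r by lra. lra. }
  intros eps Heps. destruct (cont_eps Q delta HQc eps Heps) as [eta [Heta Hce]].
  destruct (Happ eta Heta) as [del [Hdel Hp]]. exists del. split; [lra|].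
  intros x Hx. destruct (HDx x ltac:(lra)) as (H0 & Hlt & _). specialize (Hp x Hx).
  rewrite Psi_eq by (apply Hrad; rewrite Rabs_pos_eq; lra).
  change (PhiR d x * PSeries (PS_derive F) (PhiR d x) / PSeries F (PhiR d x)) with (Q (PhiR d x)).
  assert (Hq : Rabs (Q (PhiR d x) - Q delta) < eps) by (apply Hce; rewrite Rabs_left; lra).
  apply Rabs_lt_between in Hq. lra.
Qed.

End Analysis.

Lemma ball_R x e y : ball x e y <-> Rabs (y - x) < e.
Proof.
  unfold ball; simpl; unfold AbsRing_ball, abs, minus, plus, opp; simpl. tauto.
Qed.

Lemma left_lim_to_filter r f l : left_lim (Fin r) f (Fin l) -> filterlim f (at_left r) (locally l).
Proof.
  intros H P [eps HP]. destruct (H eps (cond_pos eps)) as [del [Hdel Hf]].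
  exists (mkposreal del Hdel). intros y Hy Hyr. apply HP. apply ball_R.
  apply Hf. apply ball_R in Hy. apply Rabs_lt_between in Hy. unfold minus, plus, opp in Hy; simpl in Hy. lra.
Qed.

Lemma filter_to_left_lim r f l : filterlim f (at_left r) (locally l) -> left_lim (Fin r) f (Fin l).
Proof.
  intros H eps Heps.
  assert (Hl : locally l (fun y => Rabs (y - l) < eps)).
  { exists (mkposreal eps Heps). intros y Hy. apply ball_R in Hy. exact Hy. }
  destruct (H _ Hl) as [del Hd]. exists del. split. apply cond_pos.
  intros t Ht. apply Hd. apply ball_R. rewrite Rabs_left; lra. lra.
Qed.

Lemma lim_g r (u v : R -> R) a b : a <> 1 -> b <> 1 ->
  left_lim (Fin r) u (Fin a) -> left_lim (Fin r) v (Fin b) ->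
  left_lim (Fin r) (fun x => u x / ((1 - u x) * (1 - v x))) (Fin (a / ((1 - a) * (1 - b)))).
Proof.
  intros Ha Hb Hu Hv. apply left_lim_to_filter in Hu. apply left_lim_to_filter in Hv.
  apply filter_to_left_lim.
  assert (Hc1 : filterlim (fun y => y / (1 - y)) (locally a) (locally (a / (1 - a)))).
  { apply (ex_derive_continuous (fun y => y / (1 - y))). auto_derive. lra. }
  assert (Hc2 : filterlim (fun y => / (1 - y)) (locally b) (locally (/ (1 - b)))).
  { apply (ex_derive_continuous (fun y => / (1 - y))). auto_derive. lra. }
  pose proof (filterlim_comp _ _ _ u _ _ _ _ Hu Hc1) as H1.
  pose proof (filterlim_comp _ _ _ v _ _ _ _ Hv Hc2) as H2.
  pose proof (filterlim_comp_2 _ _ (fun p q : R => mult p q) H1 H2 (filterlim_mult _ _)) as H3.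
  replace (a / ((1 - a) * (1 - b))) with (mult (a / (1 - a)) (/ (1 - b))).
  - eapply filterlim_ext_loc; [|exact H3].
    assert (Hne : forall c, c <> 1 -> locally c (fun y => y <> 1)).
    { intros c Hc. assert (Hp : 0 < Rabs (c - 1)) by (apply Rabs_pos_lt; lra).
      exists (mkposreal _ Hp). intros y Hy. apply (proj1 (ball_R _ _ _)) in Hy. intros Heq. rewrite Heq in Hy.
      assert (E : Rabs (1 - c) = Rabs (c - 1)) by apply Rabs_minus_sym. simpl in Hy. lra. }
    assert (Eu : at_left r (fun x => u x <> 1)) by exact (Hu _ (Hne a Ha)).
    assert (Ev : at_left r (fun x => v x <> 1)) by exact (Hv _ (Hne b Hb)).
    pose proof (filter_and _ _ Eu Ev) as E. eapply filter_imp; [|exact E]. intros x [E1 E2].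
    unfold mult; simpl. field. split; lra.
  - unfold mult; simpl. field. split; lra.
Qed.

Lemma radius_unique w r1 r2 : is_radius w r1 -> is_radius w r2 -> r1 = r2.
Proof.
  assert (Hfp : forall a, is_radius w (Fin a) -> is_radius w PInf -> False).
  { intros a [Ha [_ Hout]] Hinf. apply (Hout (a + 1)). lra. apply Hinf. lra. }
  destruct r1 as [a|], r2 as [b|]; intros H1 H2; auto.
  - destruct H1 as [Ha [Hin1 Hout1]], H2 as [Hb [Hin2 Hout2]].
    destruct (Rtotal_order a b) as [Hab|[Hab|Hab]].
    + exfalso. apply (Hout1 ((a + b) / 2)). lra. apply Hin2. lra.
    + subst; auto.
    + exfalso. apply (Hout2 ((a + b) / 2)). lra. apply Hin1. lra.
  - exfalso; eauto.
  - exfalso; eauto.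
Qed.

Lemma left_lim_unique r f l1 l2 : left_lim (Fin r) f (Fin l1) -> left_lim (Fin r) f (Fin l2) -> l1 = l2.
Proof.
  intros H1 H2. destruct (Req_dec l1 l2) as [|Hne]; auto. exfalso.
  set (e := Rabs (l1 - l2) / 2).
  assert (He' : 0 < e). { unfold e. assert (0 < Rabs (l1 - l2)) by (apply Rabs_pos_lt; lra). lra. }
  destruct (H1 e He') as [d1 [Hd1 G1]]. destruct (H2 e He') as [d2 [Hd2 G2]].
  set (t := r - Rmin d1 d2 / 2).
  assert (Rmin d1 d2 <= d1) by apply Rmin_l. assert (Rmin d1 d2 <= d2) by apply Rmin_r.
  assert (0 < Rmin d1 d2) by (apply Rmin_pos; lra).
  specialize (G1 t ltac:(unfold t; lra)). specialize (G2 t ltac:(unfold t; lra)).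
  assert (Rabs (l1 - l2) <= Rabs (f t - l2) + Rabs (f t - l1)).
  { replace (l1 - l2) with ((f t - l2) - (f t - l1)) by ring. eapply Rle_trans. apply Rabs_triang. rewrite Rabs_Ropp. lra. }
  unfold e in *. lra.
Qed.

Lemma two_terms (f : nat -> R) k : (forall n, 0 <= f n) -> (1 <= k)%nat -> f O + f k <= sum_f_R0 f k.
Proof.
  intros Hf Hk. destruct k as [|k]. lia. rewrite tech5.
  pose proof (term_le_sum f 0 k Hf ltac:(lia)). lra.
Qed.

Lemma tD_ge F t N : (forall n, 0 <= F n) -> 0 <= t ->
  sum_f_R0 (term F t) N - F O <= sum_f_R0 (fun n => INR n * F n * t ^ n) N.
Proof.
  intros HF Ht. induction N as [|N IH].
  - simpl. unfold term. simpl. lra.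
  - rewrite !tech5. unfold term at 2. rewrite S_INR.
    assert (0 <= INR N * F (S N) * t ^ S N).
    { apply Rmult_le_pos. apply Rmult_le_pos. apply pos_INR. apply HF. apply pow_le; auto. }
    lra.
Qed.

Lemma psi_lower F t0 t r' : weight_seq F -> 0 < t0 <= t -> t < r' -> ps_conv F r' ->
  0 < 1 - F O / PhiR F t0 /\ 1 - F O / PhiR F t0 <= Psi F t.
Proof.
  intros HW Ht Htr Hc.
  pose proof (HF F HW) as HFn. pose proof (HF0 F HW) as HF0'.
  destruct HW as [_ [_ [k [Hk HFk]]]].
  assert (Hrt : Rbar_lt (Rabs t) (CV_radius F)) by (eapply rad_abs; eauto; rewrite Rabs_pos_eq; lra).
  destruct (PhiR_PSeries F t Hrt) as [Hct _].
  destruct (conv_mono_t F t0 t HFn ltac:(lra) Hct) as [Hct0 HA].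
  assert (HA0 : F O + F k * t0 ^ k <= PhiR F t0).
  { apply (conv_ge_partial F t0 _ k HFn ltac:(lra) Hct0).
    pose proof (two_terms (term F t0) k (term_nonneg F t0 HFn ltac:(lra)) ltac:(lia)).
    unfold term at 1 2 in H. simpl in H. lra. }
  assert (Hp : 0 < F k * t0 ^ k) by (apply Rmult_lt_0_compat; auto; apply pow_lt; lra).
  assert (HB : PhiR F t - F O <= tDPhiR F t).
  { rewrite tDPhiR_eq by auto.
    apply (lim_le_lim (fun N => sum_f_R0 (term F t) N - F O) (fun N => sum_f_R0 (fun n => INR n * F n * t ^ n) N)).
    - apply is_lim_seq_Reals. apply is_lim_seq_minus'. apply is_lim_seq_Reals. apply PhiR_spec; auto.
      apply is_lim_seq_const.
    - apply tD_sum; auto.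
    - intros N. apply tD_ge; auto. lra. }
  assert (HA0p : 0 < PhiR F t0) by lra.
  split.
  - apply (Rmult_lt_reg_r (PhiR F t0)); auto. unfold Rdiv.
    rewrite Rmult_minus_distr_r, Rmult_assoc, Rinv_l, Rmult_1_r, Rmult_0_l by lra. lra.
  - unfold Psi.
    assert (F O / PhiR F t <= F O / PhiR F t0).
    { unfold Rdiv. apply Rmult_le_compat_l. lra. apply Rinv_le_contravar; lra. }
    assert (1 - F O / PhiR F t <= tDPhiR F t / PhiR F t).
    { apply (Rmult_le_reg_r (PhiR F t)). lra. unfold Rdiv.
      rewrite Rmult_minus_distr_r, !Rmult_assoc, Rinv_l, !Rmult_1_r by lra. lra. }
    lra.
Qed.

Lemma typeIII_radius F : weight_seq F -> nu_param F (Fin 0) -> is_radius F (Fin 0).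
Proof.
  intros HW [[Hr _]|[rho [Hr [Hne Hll]]]]; auto. exfalso.
  pose proof (HF0 F HW) as HF0'.
  destruct rho as [r|].
  - destruct Hr as [Hr0 [Hin _]]. assert (Hrp : 0 < r) by (destruct Hr0; auto; subst; congruence).
    destruct (psi_lower F (r/2) (r/2) (3*r/4) HW ltac:(lra) ltac:(lra) (Hin (3*r/4) ltac:(lra))) as [Hc _].
    destruct (Hll _ Hc) as [del [Hdel G]].
    set (t := Rmax (r - del/2) (r/2)).
    assert (r - del/2 <= t) by apply Rmax_l. assert (r/2 <= t) by apply Rmax_r.
    assert (t < r) by (unfold t; apply Rmax_lub_lt; lra).
    specialize (G t ltac:(lra)).
    destruct (psi_lower F (r/2) t ((t + r)/2) HW ltac:(lra) ltac:(lra) (Hin ((t + r)/2) ltac:(lra))) as [_ Hl].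
    rewrite Rminus_0_r in G. apply Rabs_def2 in G. lra.
  - destruct (psi_lower F 1 1 2 HW ltac:(lra) ltac:(lra) (Hr 2 ltac:(lra))) as [Hc _].
    destruct (Hll _ Hc) as [A0 G].
    set (t := Rmax (A0 + 1) 1).
    assert (A0 + 1 <= t) by apply Rmax_l. assert (1 <= t) by apply Rmax_r.
    specialize (G t ltac:(lra)).
    destruct (psi_lower F 1 t (t + 1) HW ltac:(lra) ltac:(lra) (Hr (t + 1) ltac:(lra))) as [_ Hl].
    rewrite Rminus_0_r in G. apply Rabs_def2 in G. lra.
Qed.

Lemma setup F d tau : weight_seq F -> is_D_series F d -> is_radius F tau -> tau <> Fin 0 ->
  exists rho delta, 0 < rho /\
    (forall x, 0 <= x < rho -> ps_conv (phi_of d) x) /\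
    (forall x, rho < x -> ~ ps_conv (phi_of d) x) /\
    0 < delta <= 1 /\
    (forall x, 0 <= x < rho -> PhiR d x < delta) /\
    (forall eta, 0 < eta -> exists del, 0 < del <= rho /\
      forall x, rho - del < x < rho -> delta - eta < PhiR d x).
Proof.
  intros HW HD Hr Hne.
  destruct (phi_radius_exists F d HW HD (small_conv F d HW HD tau Hr Hne)) as [rho [Hr0 [Hin Hout]]].
  destruct (delta_exists F d rho HW HD Hr0 Hin) as [delta Hdel].
  exists rho, delta. tauto.
Qed.

Lemma phi_is_radius d rho : 0 < rho -> (forall x, 0 <= x < rho -> ps_conv (phi_of d) x) ->
    (forall x, rho < x -> ~ ps_conv (phi_of d) x) -> is_radius (phi_of d) (Fin rho).
Proof. intros H1 H2 H3. split. lra. split; auto. Qed.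

Lemma delta_le_tau F d rho delta t0 : weight_seq F -> is_D_series F d -> is_radius F (Fin t0) ->
  (forall x, 0 <= x < rho -> ps_conv (phi_of d) x) ->
  (forall eta, 0 < eta -> exists del, 0 < del <= rho /\
      forall x, rho - del < x < rho -> delta - eta < PhiR d x) ->
  delta <= t0.
Proof.
  intros HW HD [_ [_ Hout]] Hin Happ.
  destruct (Rle_or_lt delta t0) as [H|H]; auto. exfalso.
  destruct (Happ (delta - t0) ltac:(lra)) as [del [Hdel Hp]].
  set (x := rho - del / 2). specialize (Hp x ltac:(unfold x; lra)).
  destruct (Dc F d rho HW HD Hin x ltac:(unfold x; lra)) as (_ & _ & Hc & _).
  apply (Hout (PhiR d x)); auto. lra.
Qed.

Lemma mono_BA F s t : (forall n, 0 <= F n) -> 0 <= s <= t -> Rbar_lt (Rabs t) (CV_radius F) ->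
  tDPhiR F s - PhiR F s <= tDPhiR F t - PhiR F t.
Proof.
  intros HF Hst Hr.
  assert (Hrs : Rbar_lt (Rabs s) (CV_radius F)).
  { eapply Rbar_le_lt_trans; [|exact Hr]. simpl. rewrite !Rabs_pos_eq; lra. }
  destruct (PhiR_PSeries F s Hrs) as [Hcs _]. destruct (PhiR_PSeries F t Hr) as [Hct _].
  apply (lim_le_lim (fun N => sum_f_R0 (fun n => INR n * F n * s ^ n) N - sum_f_R0 (term F s) N)
                    (fun N => sum_f_R0 (fun n => INR n * F n * t ^ n) N - sum_f_R0 (term F t) N)).
  - apply is_lim_seq_Reals. apply is_lim_seq_minus'; apply is_lim_seq_Reals.
    + rewrite tDPhiR_eq by auto. apply tD_sum; auto.
    + apply PhiR_spec; auto.
  - apply is_lim_seq_Reals. apply is_lim_seq_minus'; apply is_lim_seq_Reals.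
    + rewrite tDPhiR_eq by auto. apply tD_sum; auto.
    + apply PhiR_spec; auto.
  - intros N. rewrite <- !minus_sum. apply sum_Rle. intros n _. unfold term.
    destruct n as [|n].
    + simpl. lra.
    + rewrite S_INR. assert (s ^ S n <= t ^ S n) by (apply pow_incr; lra).
      pose proof (pos_INR n). pose proof (HF (S n)).
      replace ((INR n + 1) * F (S n) * s ^ S n - F (S n) * s ^ S n) with (INR n * F (S n) * s ^ S n) by ring.
      replace ((INR n + 1) * F (S n) * t ^ S n - F (S n) * t ^ S n) with (INR n * F (S n) * t ^ S n) by ring.
      apply Rmult_le_compat_l; auto. apply Rmult_le_pos; auto.
Qed.

Lemma left_lim_ext_pos r f g l : 0 < r -> (forall x, 0 < x < r -> f x = g x) ->
  left_lim (Fin r) g l -> left_lim (Fin r) f l.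
Proof.
  intros Hr E. destruct l as [l|]; simpl.
  - intros H eps Heps. destruct (H eps Heps) as [del [Hdel G]]. exists (Rmin del r).
    split. apply Rmin_pos; lra. intros t Ht.
    assert (Rmin del r <= del) by apply Rmin_l. assert (Rmin del r <= r) by apply Rmin_r.
    rewrite E by lra. apply G. lra.
  - intros H M. destruct (H M) as [del [Hdel G]]. exists (Rmin del r).
    split. apply Rmin_pos; lra. intros t Ht.
    assert (Rmin del r <= del) by apply Rmin_l. assert (Rmin del r <= r) by apply Rmin_r.
    rewrite E by lra. apply G. lra.
Qed.

Lemma infinity_result F d tau : weight_seq F -> is_D_series F d -> is_radius F tau -> tau <> Fin 0 ->
  (forall t0, tau = Fin t0 -> t0 < 1 -> exists L, ext_ge L (Fin 1) /\ left_lim (Fin t0) (Psi F) L) ->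
  nu_param (phi_of d) PInf.
Proof.
  intros HW HD Hr Hne Hcond.
  destruct (setup F d tau HW HD Hr Hne) as (rho & delta & Hr0 & Hin & Hout & Hdl & Hdlt & Happ).
  right. exists (Fin rho). split; [apply phi_is_radius; auto|]. split; [intros E; injection E; lra|].
  destruct (Req_dec delta 1) as [E1|Ne1].
  { eapply (inf_delta1 F d rho HW HD Hr0 Hin delta); eauto. }
  assert (Hd1 : delta < 1) by lra.
  assert (Hb : (exists y1, delta < y1 /\ ps_conv F y1) -> left_lim (Fin rho) (Psi (phi_of d)) PInf).
  { intros Hy. eapply (inf_psi1 F d rho HW HD Hr0 Hin).
    eapply (beyond F d rho HW HD Hr0 Hin Hout delta Hdl Hdlt Happ Hd1 Hy). }
  destruct tau as [t0|].
  - pose proof (delta_le_tau F d rho delta t0 HW HD Hr Hin Happ) as Hle.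
    destruct (Rle_lt_or_eq_dec _ _ Hle) as [Hlt|Heq].
    + apply Hb. exists ((delta + t0) / 2). split. lra. apply Hr. lra.
    + subst t0. destruct (Hcond delta eq_refl Hd1) as [L [HL HLl]].
      pose proof (comp_left_lim F d rho delta Hdlt Happ L HLl) as HC.
      destruct L as [l|].
      * simpl in HL. eapply (inf_psi1 F d rho HW HD Hr0 Hin).
        intros eps Heps. destruct (HC eps Heps) as [del [Hdel G]]. exists del. split; auto.
        intros x Hx. specialize (G x Hx). apply Rabs_def2 in G. lra.
      * exfalso. destruct (HC 1) as [del [Hdel G]].
        set (x := rho - Rmin del rho / 2).
        assert (Rmin del rho <= del) by apply Rmin_l. assert (Rmin del rho <= rho) by apply Rmin_r.
        assert (0 < Rmin del rho) by (apply Rmin_pos; lra).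
        specialize (G x ltac:(unfold x; lra)).
        destruct (PsiForm F d rho HW HD Hr0 Hin x ltac:(unfold x; lra)) as (_ & HP & _). lra.
  - apply Hb. exists (delta + 1). split. lra. apply Hr. lra.
Qed.

Lemma finite_result F d tau nu : weight_seq F -> is_D_series F d -> is_radius F (Fin tau) ->
  0 < tau < 1 -> nu < 1 -> left_lim (Fin tau) (Psi F) (Fin nu) ->
  nu_param (phi_of d) (Fin (tau / ((1 - tau) * (1 - nu)))).
Proof.
  intros HW HD Hr Htau Hnu Hll.
  assert (Hne : Fin tau <> Fin 0) by (intros E; injection E; lra).
  destruct (setup F d (Fin tau) HW HD Hr Hne) as (rho & delta & Hr0 & Hin & Hout & Hdl & Hdlt & Happ).
  right. exists (Fin rho). split; [apply phi_is_radius; auto|]. split; [intros E; injection E; lra|].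
  pose proof (delta_le_tau F d rho delta tau HW HD Hr Hin Happ) as Hle.
  pose proof (HF F HW) as HFn.
  destruct (Rle_lt_or_eq_dec _ _ Hle) as [Hlt|Heq].
  - exfalso.
    assert (Hy : exists y1, delta < y1 /\ ps_conv F y1).
    { exists ((delta + tau) / 2). split. lra. apply Hr. lra. }
    set (e0 := (1 - nu) / 2).
    pose proof (beyond F d rho HW HD Hr0 Hin Hout delta Hdl Hdlt Happ ltac:(lra) Hy (e0 / 2) ltac:(unfold e0; lra))
      as [del [Hdel G]].
    destruct (Hll e0 ltac:(unfold e0; lra)) as [del1 [Hdel1 G1]].
    set (t := Rmax (tau - del1 / 2) ((delta + tau) / 2)).
    assert (tau - del1/2 <= t) by apply Rmax_l. assert ((delta + tau)/2 <= t) by apply Rmax_r.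
    assert (t < tau) by (unfold t; apply Rmax_lub_lt; lra).
    specialize (G1 t ltac:(lra)). apply Rabs_def2 in G1.
    set (x := rho - Rmin del rho / 2).
    assert (Rmin del rho <= del) by apply Rmin_l. assert (Rmin del rho <= rho) by apply Rmin_r.
    assert (0 < Rmin del rho) by (apply Rmin_pos; lra).
    specialize (G x ltac:(unfold x; lra)).
    destruct (Dc F d rho HW HD Hin x ltac:(unfold x; lra)) as (_ & _ & Hcy & _ & Hy0).
    assert (Hyd : PhiR d x < delta) by (apply Hdlt; unfold x; lra).
    set (y := PhiR d x) in *.
    assert (Hrt : Rbar_lt (Rabs t) (CV_radius F))
      by (apply (rad_abs F t ((t + tau)/2) HFn); [rewrite Rabs_pos_eq; lra|apply Hr; lra]).
    pose proof (mono_BA F y t HFn ltac:(lra) Hrt) as Hm.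
    destruct (PhiR_PSeries F t Hrt) as [Hct _].
    destruct (conv_mono_t F y t HFn ltac:(lra) Hct) as [_ HAyt].
    assert (HAy : F O <= PhiR F y) by (apply F_ge_F0; auto).
    pose proof (HF0 F HW) as HF0'.
    unfold Psi in G, G1.
    assert (HGy : (1 - e0/2) * PhiR F y < tDPhiR F y).
    { apply (Rmult_lt_compat_r (PhiR F y)) in G; [|lra].
      unfold Rdiv in G. rewrite Rmult_assoc, Rinv_l, Rmult_1_r in G by lra. lra. }
    assert (HGt : tDPhiR F t < (nu + e0) * PhiR F t).
    { destruct G1 as [G1 _]. assert (G1' : tDPhiR F t / PhiR F t < nu + e0) by lra.
      apply (Rmult_lt_compat_r (PhiR F t)) in G1'; [|lra].
      unfold Rdiv in G1'. rewrite Rmult_assoc, Rinv_l, Rmult_1_r in G1' by lra. lra. }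
    assert (He0 : 0 < e0) by (unfold e0; lra).
    assert (nu + e0 = 1 - e0) by (unfold e0; lra).
    assert (e0 / 2 * PhiR F y <= e0 / 2 * PhiR F t) by (apply Rmult_le_compat_l; lra).
    nra.
  - subst delta.
    apply (left_lim_ext_pos rho _ (fun x => PhiR d x / ((1 - PhiR d x) * (1 - Psi F (PhiR d x))))); auto.
    + intros x Hx. destruct (PsiForm F d rho HW HD Hr0 Hin x Hx) as (_ & _ & E). exact E.
    + apply lim_g; try lra.
      * apply (lim_D d rho tau Hdlt Happ).
      * apply (comp_left_lim F d rho tau Hdlt Happ (Fin nu) Hll).
Qed.

Theorem mainTheorem15 (phiD d : ps) :
  weight_seq phiD -> is_D_series phiD d ->
  (* (1) *)
  (typeI phiD -> typeIa (phi_of d) /\ nu_param (phi_of d) PInf) /\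
  (* (2) *)
  (forall (tauD : ext) (nuD : R),
     typeII phiD -> is_radius phiD tauD -> nu_param phiD (Fin nuD) ->
     (* (a) *)
     (forall tau, tauD = Fin tau -> tau < 1 ->
        nu_param (phi_of d) (Fin (tau / ((1 - tau) * (1 - nuD))))) /\
     (* (b) *)
     (ext_ge tauD (Fin 1) ->
        typeIa (phi_of d) /\ nu_param (phi_of d) PInf)) /\
  (* (3) *)
  (typeIII phiD -> nu_param (phi_of d) (Fin 0) /\ typeIII (phi_of d)).
Proof.
  intros HW HD. split; [|split].
  - intros [nu [Hnu Hge]].
    destruct Hnu as [[Hr0 ->]|[rhoF [HrF [Hne Hll]]]].
    + simpl in Hge. lra.
    + assert (Hinf : nu_param (phi_of d) PInf).
      { apply (infinity_result phiD d rhoF HW HD HrF Hne).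
        intros t0 -> _. exists nu. auto. }
      split; auto. exists PInf. split; auto. simpl. auto.
  - intros tauD nuD HII HrD HnuD.
    destruct HII as [nu [Hnu [Hg0 Hl1]]].
    destruct nu as [n|]; [|simpl in Hl1; contradiction].
    simpl in Hg0, Hl1.
    destruct Hnu as [[_ E]|[rhoF [HrF [Hne Hll]]]].
    { injection E; lra. }
    assert (ErF : rhoF = tauD) by (apply (radius_unique phiD); auto). subst rhoF.
    split.
    + intros tau Etau Htau1. subst tauD.
      assert (Htau0 : 0 < tau).
      { destruct HrF as [H0 _]. destruct H0 as [H0|H0]; auto. subst; congruence. }
      destruct HnuD as [[Hr0 _]|[r2 [Hr2 [_ Hll2]]]].
      { pose proof (radius_unique phiD _ _ HrD Hr0) as E. injection E; lra. }
      assert (Er2 : r2 = Fin tau) by (apply (radius_unique phiD); auto). subst r2.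
      pose proof (left_lim_unique tau (Psi phiD) n nuD Hll Hll2). subst nuD.
      apply (finite_result phiD d tau n HW HD HrD); auto.
    + intros Hge.
      assert (Hinf : nu_param (phi_of d) PInf).
      { apply (infinity_result phiD d tauD HW HD HrD Hne).
        intros t0 Et0 Ht0. subst tauD. simpl in Hge. lra. }
      split; auto. exists PInf. split; auto. simpl. auto.
  - intros HIII.
    pose proof (typeIII_radius phiD HW HIII) as Hr0.
    assert (Hrp : is_radius (phi_of d) (Fin 0)).
    { split. lra. split. intros t Ht; lra.
      intros t Ht Hc.
      destruct (proj1 (phi_conv_iff phiD d HW HD t ltac:(lra)) Hc) as [Hcd _].
      destruct (Dfix phiD d HW HD t ltac:(lra) Hcd) as [HcF _].
      pose proof (D_lower phiD d HW HD t ltac:(lra) Hcd).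
      pose proof (HF0 phiD HW).
      destruct Hr0 as [_ [_ Hout]]. apply (Hout (PhiR d t)); auto. nra. }
    split; left; auto.
Qed.
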